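(* Let $\theta\in\mathbb{R}$, let $\mathcal{A}_\theta$ be the smooth noncommutative torus and let $\tau\in\mathbb{C}$ with $\Im\tau>0$. For every projection $p\in\mathcal{A}_\theta$ (i.e. $p=p^2=p^*$), define $$S_{(\tau)}(p)=\frac{1}{2\pi}\int \sqrt{\det g}\; g^{\mu\nu}\,\partial_\mu p\,\partial_\nu p ,\qquad \psi(p)=-\frac{1}{2\pi i}\int p\big[\partial_1(p)\partial_2(p)-\partial_2(p)\partial_1(p)\big].$$ Then $$S_{(\tau)}(p)\ \geq\ 2\,|\psi(p)| .$$ Moreover, equality $S_{(\tau)}(p)=2|\psi(p)|$ holds whenever $p$ satisfies one of the equations $\bar{\partial}_{(\tau)}(p)\,p=0$, $p\,\partial_{(\tau)}(p)=0$, $\partial_{(\tau)}(p)\,p=0$, $p\,\bar{\partial}_{(\tau)}(p)=0$.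
   Context: $\mathcal{A}_\theta$ is the unital $*$-algebra of series $a=\sum_{(m,n)\in\mathbb{Z}^2}a_{mn}U_1^mU_2^n$ with $(a_{mn})$ a complex Schwartz (rapidly decreasing) sequence on $\mathbb{Z}^2$, where $U_1,U_2$ are unitaries with $U_2U_1=e^{2\pi i\theta}U_1U_2$. The integral $\int:\mathcal{A}_\theta\to\mathbb{C}$ denotes the normalized positive faithful trace $\int\sum a_{mn}U_1^mU_2^n:=a_{00}$. The derivations $\partial_1,\partial_2$ of $\mathcal{A}_\theta$ are defined by $\partial_\mu(U_\nu)=2\pi i\,\delta_\mu^\nu U_\nu$ ($\mu,\nu=1,2$), extended by the Leibniz rule and linearity. The metric associated with $\tau$ is $g=(g_{\mu\nu})=\begin{pmatrix}1&\Re\tau\\ \Re\tau&|\tau|^2\end{pmatrix}$, with inverse $(g^{\mu\nu})=\frac{1}{(\Im\tau)^2}\begin{pmatrix}|\tau|^2&-\Re\tau\\-\Re\tau&1\end{pmatrix}$ and $\sqrt{\det g}=\Im\tau$; repeated indices are summed over $1,2$. The derivations $\partial_{(\tau)}=\frac{1}{\tau-\bar\tau}(-\bar\tau\partial_1+\partial_2)$ and $\bar\partial_{(\tau)}=\frac{1}{\tau-\bar\tau}(\tau\partial_1-\partial_2)$. *)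

(* Defs.v *)
From Stdlib Require Import Reals ZArith List.
From Coquelicot Require Import Coquelicot.
Open Scope R_scope.

(** Elements of the smooth noncommutative torus A_theta are represented by
    their coefficient sequences a : Z -> Z -> C, a = sum a m n U1^m U2^n. *)
Definition coefs := Z -> Z -> C.

Definition schwartz (a : coefs) : Prop :=
  forall k : nat, exists M : R, forall m n : Z,
    (1 + Rabs (IZR m) + Rabs (IZR n)) ^ k * Cmod (a m n) <= M.

Definition cexpi (t : R) : C := (cos t, sin t).

Definition sumZ (N : nat) (f : Z -> C) : C :=
  fold_right Cplus (RtoC 0)
    (map (fun j => f (Z.of_nat j - Z.of_nat N)%Z) (seq 0 (2 * N + 1))).

Definition CLim (u : nat -> C) : C :=
  (real (Lim_seq (fun N => Re (u N))), real (Lim_seq (fun N => Im (u N)))).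

(** Sum over Z^2 (limit of partial sums over squares [-N,N]^2; the series
    that occur below are absolutely convergent). *)
Definition sumZ2 (f : Z -> Z -> C) : C :=
  CLim (fun N => sumZ N (fun k => sumZ N (fun l => f k l))).

(** Product in A_theta, from U2 U1 = e^{2 pi i theta} U1 U2:
    (a_{kl} U1^k U2^l)(b_{k'l'} U1^k' U2^l') = e^{2 pi i theta l k'} a b U1^{k+k'} U2^{l+l'}. *)
Definition nct_mul (theta : R) (a b : coefs) : coefs :=
  fun m n => sumZ2 (fun k l =>
    (a k l * b (m - k)%Z (n - l)%Z * cexpi (2 * PI * theta * IZR l * IZR (m - k)))%C).

(** Adjoint: (U1^m U2^n)^* = U2^{-n} U1^{-m} = e^{2 pi i theta m n} U1^{-m} U2^{-n}. *)
Definition nct_star (theta : R) (a : coefs) : coefs :=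
  fun m n => (Cconj (a (- m)%Z (- n)%Z) * cexpi (2 * PI * theta * IZR m * IZR n))%C.

Definition nct_add (a b : coefs) : coefs := fun m n => (a m n + b m n)%C.
Definition nct_sub (a b : coefs) : coefs := fun m n => (a m n - b m n)%C.
Definition nct_scal (c : C) (a : coefs) : coefs := fun m n => (c * a m n)%C.

(** Trace: int sum a_{mn} U1^m U2^n = a_{00}. *)
Definition nct_int (a : coefs) : C := a 0%Z 0%Z.

(** Derivations: d_mu (U_nu) = 2 pi i delta U_nu. *)
Definition d1 (a : coefs) : coefs := fun m n => (Ci * RtoC (2 * PI * IZR m) * a m n)%C.
Definition d2 (a : coefs) : coefs := fun m n => (Ci * RtoC (2 * PI * IZR n) * a m n)%C.
Definition dmu (mu : bool) : coefs -> coefs := if mu then d2 else d1. (* false = 1, true = 2 *)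

Definition is_projection (theta : R) (p : coefs) : Prop :=
  schwartz p /\ p = nct_mul theta p p /\ p = nct_star theta p.

Definition sqrt_det_g (tau : C) : R := Im tau.
Definition ginv (tau : C) (mu nu : bool) : R :=
  / (Im tau) ^ 2 *
  match mu, nu with
  | false, false => Cmod tau ^ 2
  | true, true => 1
  | _, _ => - Re tau
  end.

Definition S_tau (theta : R) (tau : C) (p : coefs) : C :=
  (RtoC (/ (2 * PI)) *
   fold_right Cplus (RtoC 0)
     (map (fun mn : bool * bool =>
             RtoC (sqrt_det_g tau * ginv tau (fst mn) (snd mn)) *
             nct_int (nct_mul theta (dmu (fst mn) p) (dmu (snd mn) p)))
          ((false, false) :: (false, true) :: (true, false) :: (true, true) :: nil)))%C.

Definition psi (theta : R) (p : coefs) : C :=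
  (- / (RtoC (2 * PI) * Ci) *
   nct_int (nct_mul theta p
     (nct_sub (nct_mul theta (d1 p) (d2 p)) (nct_mul theta (d2 p) (d1 p)))))%C.

Definition del_tau (tau : C) (a : coefs) : coefs :=
  nct_scal (/ (tau - Cconj tau))%C
    (nct_add (nct_scal (- Cconj tau)%C (d1 a)) (d2 a)).
Definition delbar_tau (tau : C) (a : coefs) : coefs :=
  nct_scal (/ (tau - Cconj tau))%C
    (nct_sub (nct_scal tau (d1 a)) (d2 a)).

Definition zero_coefs : coefs := fun _ _ => RtoC 0.

(* Main.v *)
From Pilot Require Import Defs.
From Stdlib Require Import Reals ZArith List Lia Lra FunctionalExtensionality.
From Coquelicot Require Import Coquelicot.
Open Scope R_scope.
Notation d1 := Pilot.Defs.d1.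
Notation d2 := Pilot.Defs.d2.

Lemma fold_Cplus_app (l1 l2 : list C) :
  fold_right Cplus (RtoC 0) (l1 ++ l2) = (fold_right Cplus (RtoC 0) l1 + fold_right Cplus (RtoC 0) l2)%C.
Proof.
  induction l1 as [|x l1 IH]; simpl.
  - ring.
  - rewrite IH. ring.
Qed.

Lemma fold_seq_shift (h : nat -> C) s n :
  fold_right Cplus (RtoC 0) (map h (seq (S s) n)) =
  fold_right Cplus (RtoC 0) (map (fun j => h (S j)) (seq s n)).
Proof.
  rewrite <- seq_shift, map_map. reflexivity.
Qed.

Lemma sumZ_0 f : sumZ 0 f = f 0%Z.
Proof. unfold sumZ. simpl. rewrite Cplus_0_r. reflexivity. Qed.

Lemma sumZ_S N f :
  sumZ (S N) f = (f (- Z.of_nat (S N))%Z + sumZ N f + f (Z.of_nat (S N)))%C.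
Proof.
  unfold sumZ.
  replace (2 * S N + 1)%nat with (S (S (2 * N + 1))) by lia.
  rewrite (seq_S (S (2*N+1)) 0). rewrite map_app, fold_Cplus_app.
  simpl (seq 0 (S (2 * N + 1))). simpl map at 1. simpl fold_right at 1.
  rewrite fold_seq_shift.
  simpl fold_right at 3.
  replace (Z.of_nat 0 - Z.of_nat (S N))%Z with (- Z.of_nat (S N))%Z by lia.
  replace (Z.of_nat (0 + S (2 * N + 1)) - Z.of_nat (S N))%Z with (Z.of_nat (S N)) by lia.
  rewrite (map_ext (fun j : nat => f (Z.of_nat (S j) - Z.of_nat (S N))%Z)
                   (fun j : nat => f (Z.of_nat j - Z.of_nat N)%Z)).
  2:{ intros j. f_equal. lia. }
  cbn [map fold_right]. rewrite Cplus_0_r.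
  f_equal. f_equal. f_equal; lia.
Qed.

Ltac sumZ_ind N := induction N as [|N IHN]; [rewrite ?sumZ_0 | rewrite ?sumZ_S].

Lemma sumZ_ext N f g : (forall k, f k = g k) -> sumZ N f = sumZ N g.
Proof. intros H. unfold sumZ. f_equal. apply map_ext. intros; apply H. Qed.

Lemma sumZ_plus N f g : sumZ N (fun k => f k + g k)%C = (sumZ N f + sumZ N g)%C.
Proof. induction N as [|N IHN]; rewrite ?sumZ_0, ?sumZ_S; try rewrite IHN; ring. Qed.

Lemma sumZ_scal N c f : sumZ N (fun k => c * f k)%C = (c * sumZ N f)%C.
Proof. induction N as [|N IHN]; rewrite ?sumZ_0, ?sumZ_S; try rewrite IHN; ring. Qed.

Lemma sumZ_scal_r N c f : sumZ N (fun k => f k * c)%C = (sumZ N f * c)%C.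
Proof. induction N as [|N IHN]; rewrite ?sumZ_0, ?sumZ_S; try rewrite IHN; ring. Qed.

Lemma sumZ_zero N : sumZ N (fun _ => RtoC 0) = RtoC 0.
Proof. induction N as [|N IHN]; rewrite ?sumZ_0, ?sumZ_S; try rewrite IHN; ring. Qed.

Lemma sumZ_swap N M (F : Z -> Z -> C) :
  sumZ N (fun k => sumZ M (fun l => F k l)) = sumZ M (fun l => sumZ N (fun k => F k l)).
Proof.
  induction N as [|N IHN].
  - rewrite sumZ_0. apply sumZ_ext. intros; rewrite sumZ_0; auto.
  - rewrite sumZ_S, IHN.
    rewrite <- !sumZ_plus. apply sumZ_ext. intros; rewrite sumZ_S; auto.
Qed.

Lemma Re_sumZ N f : Re (sumZ N f) = fold_right Rplus 0 (map (fun j => Re (f (Z.of_nat j - Z.of_nat N)%Z)) (seq 0 (2*N+1))).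
Proof.
  unfold sumZ. generalize (seq 0 (2*N+1)). intros l; induction l; simpl; auto.
  rewrite <- IHl. reflexivity.
Qed.

Lemma Re_RtoC (x : R) : Re (RtoC x) = x. Proof. reflexivity. Qed.
Lemma Im_RtoC (x : R) : Im (RtoC x) = 0. Proof. reflexivity. Qed.
Lemma Re_RtoC_mult (c : R) (z : C) : Re (RtoC c * z)%C = c * Re z.
Proof. destruct z as [x y]. unfold Re, RtoC, Cmult; simpl. ring. Qed.
Lemma Im_RtoC_mult (c : R) (z : C) : Im (RtoC c * z)%C = c * Im z.
Proof. destruct z as [x y]. unfold Im, RtoC, Cmult; simpl. ring. Qed.
Lemma Re_plus (a b : C) : Re (a + b)%C = Re a + Re b. Proof. reflexivity. Qed.
Lemma Im_plus (a b : C) : Im (a + b)%C = Im a + Im b. Proof. reflexivity. Qed.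

Lemma sumZ_conj N f : Cconj (sumZ N f) = sumZ N (fun k => Cconj (f k)).
Proof.
  induction N as [|N IHN]; rewrite ?sumZ_0, ?sumZ_S; auto.
  rewrite <- IHN. unfold Cconj; simpl. apply injective_projections; simpl; ring.
Qed.

Lemma sumZ_neg N f : sumZ N (fun k => f (- k)%Z) = sumZ N f.
Proof.
  induction N as [|N IHN]; rewrite ?sumZ_0, ?sumZ_S.
  - reflexivity.
  - rewrite IHN. rewrite Z.opp_involutive. ring.
Qed.

Lemma sumZ_shift1 N f :
  sumZ N (fun k => f (k + 1)%Z) = (sumZ N f - f (- Z.of_nat N)%Z + f (Z.of_nat N + 1)%Z)%C.
Proof.
  induction N as [|N IHN]; rewrite ?sumZ_0, ?sumZ_S.
  - simpl. ring.
  - rewrite IHN.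
    replace (- Z.of_nat (S N) + 1)%Z with (- Z.of_nat N)%Z by lia.
    replace (Z.of_nat (S N))%Z with (Z.of_nat N + 1)%Z by lia.
    ring.
Qed.

Lemma Re_sumZ' N f : Re (sumZ N f) = Re (sumZ N (fun k => RtoC (Re (f k)))).
Proof.
  induction N as [|N IHN]; rewrite ?sumZ_0, ?sumZ_S, ?Re_plus.
  - reflexivity.
  - rewrite IHN. reflexivity.
Qed.

Lemma Im_sumZ' N f : Im (sumZ N f) = Re (sumZ N (fun k => RtoC (Im (f k)))).
Proof.
  induction N as [|N IHN]; rewrite ?sumZ_0, ?sumZ_S, ?Re_plus, ?Im_plus.
  - reflexivity.
  - rewrite IHN. reflexivity.
Qed.

Lemma Im_sumZ_R N (f : Z -> R) : Im (sumZ N (fun k => RtoC (f k))) = 0.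
Proof.
  induction N as [|N IHN]; rewrite ?sumZ_0, ?sumZ_S, ?Im_plus.
  - reflexivity.
  - rewrite IHN. simpl. ring.
Qed.

Lemma sumZ_R_nonneg N (f : Z -> R) : (forall k, 0 <= f k) -> 0 <= Re (sumZ N (fun k => RtoC (f k))).
Proof.
  intros H. induction N as [|N IHN]; rewrite ?sumZ_0, ?sumZ_S, ?Re_plus, ?Re_RtoC; auto. specialize (H (- Z.of_nat (S N))%Z) as H1.
  specialize (H (Z.of_nat (S N))). lra.
Qed.

Lemma sumZ_R_le N (f g : Z -> R) : (forall k, f k <= g k) ->
  Re (sumZ N (fun k => RtoC (f k))) <= Re (sumZ N (fun k => RtoC (g k))).
Proof.
  intros H. induction N as [|N IHN]; rewrite ?sumZ_0, ?sumZ_S, ?Re_plus, ?Re_RtoC; auto. specialize (H (- Z.of_nat (S N))%Z) as H1.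
  specialize (H (Z.of_nat (S N))). lra.
Qed.

Lemma Cmod_sumZ N f : Cmod (sumZ N f) <= Re (sumZ N (fun k => RtoC (Cmod (f k)))).
Proof.
  induction N as [|N IHN]; rewrite ?sumZ_0, ?sumZ_S, ?Re_plus, ?Re_RtoC.
  - apply Rle_refl.
  - 
    eapply Rle_trans. apply Cmod_triangle.
    eapply Rle_trans. apply Rplus_le_compat_r. apply Cmod_triangle. lra.
Qed.

Lemma sumZ_R_plus N (f g : Z -> R) :
  Re (sumZ N (fun k => RtoC (f k + g k))) = Re (sumZ N (fun k => RtoC (f k))) + Re (sumZ N (fun k => RtoC (g k))).
Proof.
  rewrite <- Re_plus, <- sumZ_plus. f_equal. apply sumZ_ext. intros; rewrite RtoC_plus; auto.
Qed.

Lemma sumZ_R_scal N c (f : Z -> R) :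
  Re (sumZ N (fun k => RtoC (c * f k))) = c * Re (sumZ N (fun k => RtoC (f k))).
Proof.
  rewrite (sumZ_ext N _ (fun k => (RtoC c * RtoC (f k))%C)).
  2:{ intros; rewrite RtoC_mult; auto. }
  rewrite sumZ_scal. apply Re_RtoC_mult.
Qed.

Definition sZr N (f : Z -> R) : R := Re (sumZ N (fun k => RtoC (f k))).
Definition SQ N (F : Z -> Z -> C) : C := sumZ N (fun k => sumZ N (fun l => F k l)).
Definition SQR N (g : Z -> Z -> R) : R := sZr N (fun k => sZr N (fun l => g k l)).

Lemma sZr_0 f : sZr 0 f = f 0%Z.
Proof. unfold sZr. rewrite sumZ_0. reflexivity. Qed.
Lemma sZr_S N f : sZr (S N) f = f (- Z.of_nat (S N))%Z + sZr N f + f (Z.of_nat (S N)).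
Proof. unfold sZr. rewrite sumZ_S. reflexivity. Qed.
Lemma sZr_ext N f g : (forall k, f k = g k) -> sZr N f = sZr N g.
Proof. intros H. unfold sZr. f_equal. apply sumZ_ext. intros; rewrite H; auto. Qed.
Lemma sZr_plus N f g : sZr N (fun k => f k + g k) = sZr N f + sZr N g.
Proof. apply sumZ_R_plus. Qed.
Lemma sZr_scal N c f : sZr N (fun k => c * f k) = c * sZr N f.
Proof. apply sumZ_R_scal. Qed.
Lemma sZr_le N f g : (forall k, f k <= g k) -> sZr N f <= sZr N g.
Proof. apply sumZ_R_le. Qed.
Lemma sZr_nonneg N f : (forall k, 0 <= f k) -> 0 <= sZr N f.
Proof. apply sumZ_R_nonneg. Qed.
Lemma sZr_opp N f : sZr N (fun k => - f k) = - sZr N f.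
Proof. rewrite (sZr_ext N _ (fun k => -1 * f k)). rewrite sZr_scal. ring. intros; ring. Qed.
Lemma sZr_minus N f g : sZr N (fun k => f k - g k) = sZr N f - sZr N g.
Proof. unfold Rminus. rewrite sZr_plus, sZr_opp. auto. Qed.
Lemma sZr_abs N f : Rabs (sZr N f) <= sZr N (fun k => Rabs (f k)).
Proof.
  unfold sZr. rewrite <- Cmod_R.
  replace (RtoC (Re (sumZ N (fun k : Z => RtoC (f k))))) with (sumZ N (fun k : Z => RtoC (f k))).
  - eapply Rle_trans. apply Cmod_sumZ. right. f_equal. apply sumZ_ext. intros; rewrite Cmod_R; auto.
  - apply injective_projections; auto. simpl. apply Im_sumZ_R.
Qed.
Lemma sumZ_RtoC N f : sumZ N (fun k => RtoC (f k)) = RtoC (sZr N f).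
Proof. apply injective_projections; auto. simpl. apply Im_sumZ_R. Qed.
Lemma sZr_const0 N : sZr N (fun _ => 0) = 0.
Proof. unfold sZr. rewrite sumZ_zero. reflexivity. Qed.

Lemma Re_SQ N F : Re (SQ N F) = SQR N (fun k l => Re (F k l)).
Proof.
  unfold SQ, SQR. rewrite Re_sumZ'. unfold sZr. f_equal. apply sumZ_ext. intros k.
  f_equal. apply Re_sumZ'.
Qed.
Lemma Im_SQ N F : Im (SQ N F) = SQR N (fun k l => Im (F k l)).
Proof.
  unfold SQ, SQR. rewrite Im_sumZ'. unfold sZr. f_equal. apply sumZ_ext. intros k.
  f_equal. apply Im_sumZ'.
Qed.

Lemma SQR_ext N f g : (forall k l, f k l = g k l) -> SQR N f = SQR N g.
Proof. intros H. unfold SQR. apply sZr_ext. intros; apply sZr_ext; auto. Qed.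
Lemma SQR_lin N a b f g : SQR N (fun k l => a * f k l + b * g k l) = a * SQR N f + b * SQR N g.
Proof.
  unfold SQR. rewrite (sZr_ext N _ (fun k => a * sZr N (fun l => f k l) + b * sZr N (fun l => g k l))).
  - rewrite sZr_plus, !sZr_scal. auto.
  - intros k. rewrite sZr_plus, !sZr_scal. auto.
Qed.
Lemma SQR_le N f g : (forall k l, f k l <= g k l) -> SQR N f <= SQR N g.
Proof. intros H. unfold SQR. apply sZr_le. intros; apply sZr_le; auto. Qed.
Lemma SQR_nonneg N f : (forall k l, 0 <= f k l) -> 0 <= SQR N f.
Proof. intros H. unfold SQR. apply sZr_nonneg. intros; apply sZr_nonneg; auto. Qed.
Lemma SQR_abs N f : Rabs (SQR N f) <= SQR N (fun k l => Rabs (f k l)).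
Proof.
  unfold SQR. eapply Rle_trans. apply sZr_abs. apply sZr_le. intros; apply sZr_abs.
Qed.
Lemma SQR_mono N f : (forall k l, 0 <= f k l) -> SQR N f <= SQR (S N) f.
Proof.
  intros H. unfold SQR.
  apply Rle_trans with (sZr (S N) (fun k => sZr N (fun l => f k l))).
  - rewrite sZr_S.
    assert (0 <= sZr N (fun l => f (- Z.of_nat (S N))%Z l)) by (apply sZr_nonneg; auto).
    assert (0 <= sZr N (fun l => f (Z.of_nat (S N)) l)) by (apply sZr_nonneg; auto). lra.
  - apply sZr_le. intros k. rewrite (sZr_S N).
    specialize (H k (- Z.of_nat (S N))%Z) as H1. specialize (H k (Z.of_nat (S N))). lra.
Qed.

Definition w1 (k : Z) : R := / (1 + IZR k ^ 2).
Definition w (k l : Z) : R := w1 k * w1 l.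

Lemma w1_pos k : 0 < w1 k.
Proof. unfold w1. apply Rinv_0_lt_compat. nra. Qed.
Lemma w1_le1 k : w1 k <= 1.
Proof. unfold w1. rewrite <- Rinv_1. apply Rinv_le_contravar; nra. Qed.
Lemma w_pos k l : 0 < w k l.
Proof. unfold w. apply Rmult_lt_0_compat; apply w1_pos. Qed.
Lemma w_le1 k l : w k l <= 1.
Proof. unfold w. pose proof (w1_le1 k); pose proof (w1_le1 l); pose proof (w1_pos k); pose proof (w1_pos l). nra. Qed.
Lemma w1_opp k : w1 (- k) = w1 k.
Proof. unfold w1. rewrite opp_IZR. f_equal. ring. Qed.

Lemma telesc_ineq (m : R) : 1 <= m -> 2 / (1 + m ^ 2) <= 4 / m - 4 / (m + 1).
Proof.
  intros Hm.
  assert (E : 4 / m - 4 / (m + 1) - 2 / (1 + m ^ 2) = 2 * (m ^ 2 - m + 2) / (m * (m + 1) * (1 + m ^ 2))).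
  { field. split; [nra|split; nra]. }
  assert (0 <= 2 * (m ^ 2 - m + 2) / (m * (m + 1) * (1 + m ^ 2))).
  { unfold Rdiv. apply Rmult_le_pos. nra. left. apply Rinv_0_lt_compat. 
    apply Rmult_lt_0_compat. nra. nra. }
  lra.
Qed.

Lemma sZr_w1_bound N : sZr N w1 <= 5 - 4 / (INR N + 1).
Proof.
  induction N as [|N IHN].
  - rewrite sZr_0. unfold w1. simpl. replace (1 + 0 * (0 * 1)) with 1 by ring.
    replace (0 + 1) with 1 by ring. rewrite Rinv_1. lra.
  - rewrite sZr_S, w1_opp.
    assert (Hw : w1 (Z.of_nat (S N)) = / (1 + (INR N + 1) ^ 2)).
    { unfold w1. rewrite <- INR_IZR_INZ, S_INR. auto. }
    rewrite Hw. rewrite S_INR.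
    pose proof (telesc_ineq (INR N + 1)) as T.
    assert (1 <= INR N + 1) by (pose proof (pos_INR N); lra).
    specialize (T H). unfold Rdiv in *. lra.
Qed.

Lemma sZr_w1_le5 N : sZr N w1 <= 5.
Proof.
  pose proof (sZr_w1_bound N). assert (0 < 4 / (INR N + 1)).
  { unfold Rdiv. apply Rmult_lt_0_compat. lra. apply Rinv_0_lt_compat. pose proof (pos_INR N). lra. }
  lra.
Qed.
Lemma sZr_w1_nonneg N : 0 <= sZr N w1.
Proof. apply sZr_nonneg. intros; left; apply w1_pos. Qed.

Lemma SQR_w N : SQR N w = sZr N w1 * sZr N w1.
Proof.
  unfold SQR, w. rewrite (sZr_ext N _ (fun k => sZr N w1 * w1 k)).
  - rewrite sZr_scal. auto.
  - intros k. rewrite sZr_scal. ring.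
Qed.
Lemma SQR_w_le N : SQR N w <= 25.
Proof. rewrite SQR_w. pose proof (sZr_w1_le5 N). pose proof (sZr_w1_nonneg N). nra. Qed.
Lemma SQR_w_nonneg N : 0 <= SQR N w.
Proof. apply SQR_nonneg. intros; left; apply w_pos. Qed.

Lemma SQR_w_ex : ex_finite_lim_seq (fun N => SQR N w).
Proof.
  apply ex_finite_lim_seq_incr with 25.
  - intros n. apply SQR_mono. intros; left; apply w_pos.
  - apply SQR_w_le.
Qed.

Definition Lw : R := real (Lim_seq (fun N => SQR N w)).

Lemma Lw_lim : is_lim_seq (fun N => SQR N w) Lw.
Proof.
  destruct SQR_w_ex as [l Hl]. unfold Lw. rewrite (is_lim_seq_unique _ _ Hl). auto.
Qed.
Lemma Lw_ge N : SQR N w <= Lw.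
Proof. apply (is_lim_seq_incr_compare (fun N => SQR N w)). apply Lw_lim. intros n; apply SQR_mono. intros; left; apply w_pos. Qed.
Lemma Lw_le : Lw <= 25.
Proof.
  pose proof (is_lim_seq_le _ _ _ _ (fun n => SQR_w_le n) Lw_lim (is_lim_seq_const 25)). simpl in H. auto.
Qed.
Lemma Lw_nonneg : 0 <= Lw.
Proof. pose proof (Lw_ge 0). pose proof (SQR_w_nonneg 0). lra. Qed.

Lemma conv_R (g : Z -> Z -> R) (C0 : R) :
  (forall k l, Rabs (g k l) <= C0 * w k l) ->
  exists L : R, is_lim_seq (fun N => SQR N g) L /\
    forall N, Rabs (L - SQR N g) <= C0 * (Lw - SQR N w).
Proof.
  intros Hg.
  set (hp := fun k l => C0 * w k l + g k l).
  set (hm := fun k l => C0 * w k l - g k l).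
  assert (Hp0 : forall k l, 0 <= hp k l).
  { intros k l. unfold hp. specialize (Hg k l). apply Rabs_le_between in Hg. lra. }
  assert (Hm0 : forall k l, 0 <= hm k l).
  { intros k l. unfold hm. specialize (Hg k l). apply Rabs_le_between in Hg. lra. }
  assert (HC0 : 0 <= C0).
  { specialize (Hg 0%Z 0%Z). pose proof (Rabs_pos (g 0%Z 0%Z)). pose proof (w_pos 0 0).
    destruct (Rle_lt_dec 0 C0); auto. nra. }
  assert (Bp : forall N, SQR N hp <= 2 * C0 * 25).
  { intros N. apply Rle_trans with (SQR N (fun k l => (2*C0) * w k l + 0 * w k l)).
    - apply SQR_le. intros k l. unfold hp. specialize (Hg k l). apply Rabs_le_between in Hg. lra.
    - rewrite SQR_lin. pose proof (SQR_w_le N). nra. }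
  assert (Bm : forall N, SQR N hm <= 2 * C0 * 25).
  { intros N. apply Rle_trans with (SQR N (fun k l => (2*C0) * w k l + 0 * w k l)).
    - apply SQR_le. intros k l. unfold hm. specialize (Hg k l). apply Rabs_le_between in Hg. lra.
    - rewrite SQR_lin. pose proof (SQR_w_le N). nra. }
  destruct (ex_finite_lim_seq_incr (fun N => SQR N hp) _ (fun n => SQR_mono n hp Hp0) Bp) as [Lp HLp].
  destruct (ex_finite_lim_seq_incr (fun N => SQR N hm) _ (fun n => SQR_mono n hm Hm0) Bm) as [Lm HLm].
  assert (Gp : forall N, SQR N hp <= Lp) by (intros; apply (is_lim_seq_incr_compare (fun N => SQR N hp)); auto; intros; apply SQR_mono; auto).
  assert (Gm : forall N, SQR N hm <= Lm) by (intros; apply (is_lim_seq_incr_compare (fun N => SQR N hm)); auto; intros; apply SQR_mono; auto).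
  assert (Eg : forall N, SQR N g = / 2 * SQR N hp + (- / 2) * SQR N hm).
  { intros N. rewrite <- SQR_lin. apply SQR_ext. intros; unfold hp, hm. field. }
  assert (Ew : forall N, SQR N hp + SQR N hm = 2 * C0 * SQR N w).
  { intros N. transitivity (SQR N (fun k l => 1 * hp k l + 1 * hm k l)).
    rewrite SQR_lin; ring.
    transitivity (SQR N (fun k l => (2*C0) * w k l + 0 * w k l)).
    apply SQR_ext; intros; unfold hp, hm; ring.
    rewrite SQR_lin; ring. }
  assert (ELw : Lp + Lm = 2 * C0 * Lw).
  { assert (H1 : is_lim_seq (fun N => SQR N hp + SQR N hm) (Lp + Lm)) by (apply is_lim_seq_plus'; auto).
    assert (H2 : is_lim_seq (fun N => SQR N hp + SQR N hm) (2 * C0 * Lw)).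
    { eapply is_lim_seq_ext. intros; symmetry; apply Ew.
      apply (is_lim_seq_scal_l _ (2 * C0) Lw). apply Lw_lim. }
    apply is_lim_seq_unique in H1. apply is_lim_seq_unique in H2. rewrite H1 in H2.
    injection H2; auto. }
  exists (/ 2 * Lp + - / 2 * Lm). split.
  - eapply is_lim_seq_ext. intros; symmetry; apply Eg.
    apply is_lim_seq_plus'; apply (is_lim_seq_scal_l _ _ (Finite _)); auto.
  - intros N. rewrite Eg. specialize (Gp N). specialize (Gm N). specialize (Ew N).
    assert (E2 : C0 * (Lw - SQR N w) = ((Lp - SQR N hp) + (Lm - SQR N hm)) / 2).
    { rewrite Rmult_minus_distr_l. replace (C0*Lw) with ((Lp+Lm)/2) by (rewrite ELw; field).
      replace (C0 * SQR N w) with ((SQR N hp + SQR N hm)/2) by (rewrite Ew; field). field. }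
    rewrite E2. apply Rabs_le. split; clearbody hp hm; clear -Gp Gm; cbn [real]; lra.
Qed.

Lemma Rabs_Im_le (c : C) : Rabs (Im c) <= Cmod c.
Proof.
  destruct c as [x y]. unfold Cmod, Im; simpl.
  rewrite <- sqrt_Rsqr_abs. apply sqrt_le_1_alt. unfold Rsqr. nra.
Qed.
Lemma Rabs_Re_le (c : C) : Rabs (Re c) <= Cmod c.
Proof. apply re_le_Cmod. Qed.
Lemma Cmod_le_ReIm (c : C) : Cmod c <= Rabs (Re c) + Rabs (Im c).
Proof.
  destruct c as [x y]. unfold Cmod, Re, Im; simpl.
  rewrite <- (sqrt_Rsqr (Rabs x + Rabs y)).
  2: { pose proof (Rabs_pos x); pose proof (Rabs_pos y); lra. }
  apply sqrt_le_1_alt. unfold Rsqr.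
  pose proof (Rabs_pos x); pose proof (Rabs_pos y).
  assert (x * (x * 1) = Rabs x * Rabs x). { rewrite <- Rabs_mult. rewrite Rabs_right. ring. apply Rle_ge; nra. }
  assert (y * (y * 1) = Rabs y * Rabs y). { rewrite <- Rabs_mult. rewrite Rabs_right. ring. apply Rle_ge; nra. }
  nra.
Qed.

Definition Dom (C0 : R) (F : Z -> Z -> C) := forall k l, Cmod (F k l) <= C0 * w k l.

Lemma Dom_nonneg C0 F : Dom C0 F -> 0 <= C0.
Proof.
  intros H. specialize (H 0%Z 0%Z). pose proof (Cmod_ge_0 (F 0%Z 0%Z)). pose proof (w_pos 0 0).
  destruct (Rle_lt_dec 0 C0); auto. nra.
Qed.

Lemma conv_C C0 F : Dom C0 F ->
  is_lim_seq (fun N => Re (SQ N F)) (Re (sumZ2 F)) /\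
  is_lim_seq (fun N => Im (SQ N F)) (Im (sumZ2 F)) /\
  (forall N, Rabs (Re (sumZ2 F) - Re (SQ N F)) <= C0 * (Lw - SQR N w)) /\
  (forall N, Rabs (Im (sumZ2 F) - Im (SQ N F)) <= C0 * (Lw - SQR N w)).
Proof.
  intros HD.
  destruct (conv_R (fun k l => Re (F k l)) C0) as [Lr [Hr1 Hr2]].
  { intros k l. eapply Rle_trans. apply Rabs_Re_le. apply HD. }
  destruct (conv_R (fun k l => Im (F k l)) C0) as [Li [Hi1 Hi2]].
  { intros k l. eapply Rle_trans. apply Rabs_Im_le. apply HD. }
  assert (ER : Re (sumZ2 F) = Lr).
  { change (Re (sumZ2 F)) with (real (Lim_seq (fun N => Re (SQ N F)))).
    rewrite (is_lim_seq_unique (fun N => Re (SQ N F)) Lr); auto.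
    eapply is_lim_seq_ext. intros; symmetry; apply Re_SQ. auto. }
  assert (EI : Im (sumZ2 F) = Li).
  { change (Im (sumZ2 F)) with (real (Lim_seq (fun N => Im (SQ N F)))).
    rewrite (is_lim_seq_unique (fun N => Im (SQ N F)) Li); auto.
    eapply is_lim_seq_ext. intros; symmetry; apply Im_SQ. auto. }
  rewrite ER, EI. split; [|split; [|split]].
  - eapply is_lim_seq_ext. intros; symmetry; apply Re_SQ. auto.
  - eapply is_lim_seq_ext. intros; symmetry; apply Im_SQ. auto.
  - intros N. rewrite Re_SQ. auto.
  - intros N. rewrite Im_SQ. auto.
Qed.

Definition CL (u : nat -> C) (z : C) : Prop :=
  is_lim_seq (fun N => Re (u N)) (Re z) /\ is_lim_seq (fun N => Im (u N)) (Im z).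

Lemma CL_unique u z z' : CL u z -> CL u z' -> z = z'.
Proof.
  intros [H1 H2] [H3 H4].
  apply is_lim_seq_unique in H1. apply is_lim_seq_unique in H2.
  apply is_lim_seq_unique in H3. apply is_lim_seq_unique in H4.
  rewrite H1 in H3. rewrite H2 in H4. injection H3; injection H4; intros.
  apply injective_projections; auto.
Qed.

Lemma CL_ext u v z : (forall N, u N = v N) -> CL u z -> CL v z.
Proof.
  intros E [H1 H2]. split; eapply is_lim_seq_ext; try eassumption; intros; simpl; rewrite E; auto.
Qed.

Lemma CL_lin u v z z' a b : CL u z -> CL v z' -> CL (fun N => a * u N + b * v N)%C (a * z + b * z')%C.
Proof.
  intros [H1 H2] [H3 H4]. split.
  - eapply is_lim_seq_ext.
    2:{ apply (is_lim_seq_plus' _ _ _ _ (is_lim_seq_minus' _ _ _ _ (is_lim_seq_scal_l _ (Re a) _ H1) (is_lim_seq_scal_l _ (Im a) _ H2))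
                      (is_lim_seq_minus' _ _ _ _ (is_lim_seq_scal_l _ (Re b) _ H3) (is_lim_seq_scal_l _ (Im b) _ H4))). }
    intros n. unfold Re, Im; simpl; ring.
  - eapply is_lim_seq_ext.
    2:{ apply (is_lim_seq_plus' _ _ _ _ (is_lim_seq_plus' _ _ _ _ (is_lim_seq_scal_l _ (Re a) _ H2) (is_lim_seq_scal_l _ (Im a) _ H1))
                      (is_lim_seq_plus' _ _ _ _ (is_lim_seq_scal_l _ (Re b) _ H4) (is_lim_seq_scal_l _ (Im b) _ H3))). }
    intros n. unfold Re, Im; simpl; ring.
Qed.

Lemma CL_conj u z : CL u z -> CL (fun N => Cconj (u N)) (Cconj z).
Proof.
  intros [H1 H2]. split; auto.
  apply (is_lim_seq_scal_l _ (-1) _) in H2. simpl in H2.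
  replace (Im (Cconj z)) with (-1 * Im z) by (unfold Im, Cconj; simpl; ring).
  eapply is_lim_seq_ext. 2: apply H2. intros; unfold Im, Cconj; simpl; ring.
Qed.

Lemma CL_sumZ2 C0 F : Dom C0 F -> CL (fun N => SQ N F) (sumZ2 F).
Proof. intros H. destruct (conv_C C0 F H) as [A [B _]]. split; auto. Qed.

Lemma SQ_lin N a b F G : SQ N (fun k l => a * F k l + b * G k l)%C = (a * SQ N F + b * SQ N G)%C.
Proof.
  unfold SQ. rewrite <- !sumZ_scal, <- sumZ_plus. apply sumZ_ext. intros k.
  rewrite <- !sumZ_scal, <- sumZ_plus. auto.
Qed.

Lemma sumZ2_ext F G : (forall k l, F k l = G k l) -> sumZ2 F = sumZ2 G.
Proof.
  intros H. replace G with F; auto. apply functional_extensionality; intros k.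
  apply functional_extensionality; intros l. auto.
Qed.

Lemma Dom_le C0 C1 F : Dom C0 F -> C0 <= C1 -> Dom C1 F.
Proof.
  intros H Hc k l. eapply Rle_trans. apply H. pose proof (w_pos k l). nra.
Qed.

Lemma Dom_lin C1 C2 F G a b : Dom C1 F -> Dom C2 G ->
  Dom (Cmod a * C1 + Cmod b * C2) (fun k l => a * F k l + b * G k l)%C.
Proof.
  intros HF HG k l. eapply Rle_trans. apply Cmod_triangle. rewrite !Cmod_mult.
  pose proof (HF k l). pose proof (HG k l). pose proof (Cmod_ge_0 a). pose proof (Cmod_ge_0 b).
  pose proof (Cmod_ge_0 (F k l)). pose proof (Cmod_ge_0 (G k l)). nra.
Qed.

Lemma sumZ2_lin C1 C2 F G a b : Dom C1 F -> Dom C2 G ->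
  sumZ2 (fun k l => a * F k l + b * G k l)%C = (a * sumZ2 F + b * sumZ2 G)%C.
Proof.
  intros HF HG.
  apply (CL_unique (fun N => SQ N (fun k l => a * F k l + b * G k l)%C)).
  - eapply CL_sumZ2. apply Dom_lin; eauto.
  - eapply CL_ext. intros; symmetry; apply SQ_lin.
    apply CL_lin; eapply CL_sumZ2; eauto.
Qed.

Lemma sumZ2_scal C1 F a : Dom C1 F -> sumZ2 (fun k l => a * F k l)%C = (a * sumZ2 F)%C.
Proof.
  intros HF. rewrite <- (Cplus_0_r (a * sumZ2 F)).
  replace (RtoC 0) with (RtoC 0 * sumZ2 F)%C by ring.
  rewrite <- (sumZ2_lin C1 C1); auto. apply sumZ2_ext; intros; ring.
Qed.

Lemma sumZ2_scal_r C1 F a : Dom C1 F -> sumZ2 (fun k l => F k l * a)%C = (sumZ2 F * a)%C.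
Proof.
  intros HF. rewrite Cmult_comm, <- (sumZ2_scal C1); auto. apply sumZ2_ext; intros; ring.
Qed.

Lemma sumZ2_plus C1 C2 F G : Dom C1 F -> Dom C2 G ->
  sumZ2 (fun k l => F k l + G k l)%C = (sumZ2 F + sumZ2 G)%C.
Proof.
  intros HF HG. rewrite <- (Cmult_1_l (sumZ2 F)), <- (Cmult_1_l (sumZ2 G)).
  rewrite <- (sumZ2_lin C1 C2); auto. apply sumZ2_ext; intros; ring.
Qed.

Lemma sumZ2_conj C0 F : Dom C0 F -> Cconj (sumZ2 F) = sumZ2 (fun k l => Cconj (F k l)).
Proof.
  intros HF. apply (CL_unique (fun N => Cconj (SQ N F))).
  - apply CL_conj. eapply CL_sumZ2; eauto.
  - eapply CL_ext. 2: { eapply CL_sumZ2. intros k l. rewrite Cmod_conj. apply HF. }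
    intros N. unfold SQ. rewrite sumZ_conj. apply sumZ_ext. intros k. rewrite sumZ_conj. auto.
Qed.

Lemma SQR_scal N c f : SQR N (fun k l => c * f k l) = c * SQR N f.
Proof.
  transitivity (SQR N (fun k l => c * f k l + 0 * f k l)).
  apply SQR_ext; intros; ring. rewrite SQR_lin. ring.
Qed.

Lemma sumZ2_bound C0 F : Dom C0 F -> Cmod (sumZ2 F) <= 50 * C0.
Proof.
  intros HF. destruct (conv_C C0 F HF) as [_ [_ [H3 H4]]].
  pose proof (Dom_nonneg _ _ HF) as HC.
  assert (B : forall g, (forall k l, Rabs (g k l) <= C0 * w k l) -> Rabs (SQR 0 g) <= C0 * SQR 0 w).
  { intros g Hg. eapply Rle_trans. apply SQR_abs.
    rewrite <- SQR_scal. apply SQR_le. auto. }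
  specialize (H3 0%nat). specialize (H4 0%nat). rewrite Re_SQ in H3. rewrite Im_SQ in H4.
  pose proof (B (fun k l => Re (F k l)) (fun k l => Rle_trans _ _ _ (Rabs_Re_le _) (HF k l))).
  pose proof (B (fun k l => Im (F k l)) (fun k l => Rle_trans _ _ _ (Rabs_Im_le _) (HF k l))).
  pose proof (Rabs_triang_inv (Re (sumZ2 F)) (SQR 0 (fun k l => Re (F k l)))).
  pose proof (Rabs_triang_inv (Im (sumZ2 F)) (SQR 0 (fun k l => Im (F k l)))).
  eapply Rle_trans. apply Cmod_le_ReIm. pose proof Lw_le.
  assert (C0 * Lw <= C0 * 25) by (apply Rmult_le_compat_l; auto).
  assert (C0 * (Lw - SQR 0 w) + C0 * SQR 0 w = C0 * Lw) by ring.
  lra.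
Qed.

Lemma sumZ2_zero : sumZ2 (fun _ _ => RtoC 0) = RtoC 0.
Proof.
  apply (CL_unique (fun N => SQ N (fun _ _ => RtoC 0))).
  - apply (CL_sumZ2 0). intros k l. rewrite Cmod_0. pose proof (w_pos k l). lra.
  - eapply CL_ext. intros N. unfold SQ. symmetry. 
    rewrite (sumZ_ext N _ (fun _ => RtoC 0)). apply sumZ_zero. intros; apply sumZ_zero.
    split; apply is_lim_seq_const.
Qed.

Lemma sumZ2_transpose F : sumZ2 (fun k l => F l k) = sumZ2 F.
Proof.
  unfold sumZ2. f_equal. apply functional_extensionality. intros N. apply sumZ_swap.
Qed.

Lemma sumZ2_neg F : sumZ2 (fun k l => F (- k)%Z (- l)%Z) = sumZ2 F.
Proof.
  unfold sumZ2. f_equal. apply functional_extensionality. intros N.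
  rewrite <- (sumZ_neg N (fun k => sumZ N (fun l => F k l))). apply sumZ_ext. intros k.
  apply (sumZ_neg N (fun l => F (- k)%Z l)).
Qed.

Lemma peetre1 (a b : R) : 1 + (a + b) ^ 2 <= 2 * (1 + a ^ 2) * (1 + b ^ 2).
Proof. nra. Qed.

Lemma w1_shift k a : w1 (k + a) <= 2 * (1 + IZR a ^ 2) * w1 k.
Proof.
  unfold w1. rewrite plus_IZR.
  pose proof (peetre1 (IZR k + IZR a) (- IZR a)).
  replace (IZR k + IZR a + - IZR a) with (IZR k) in H by ring.
  replace ((- IZR a) ^ 2) with (IZR a ^ 2) in H by ring.
  assert (0 < 1 + (IZR k + IZR a) ^ 2) by nra. assert (0 < 1 + IZR k ^ 2) by nra.
  assert (0 < 1 + IZR a ^ 2) by nra.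
  apply (Rmult_le_reg_r ((1 + (IZR k + IZR a) ^ 2) * (1 + IZR k ^ 2))). nra.
  field_simplify; try lra.
Qed.

Lemma Dom_shift C0 F a b : Dom C0 F ->
  Dom (C0 * (2 * (1 + IZR a ^ 2)) * (2 * (1 + IZR b ^ 2))) (fun k l => F (k + a)%Z (l + b)%Z).
Proof.
  intros HF k l. eapply Rle_trans. apply HF. pose proof (Dom_nonneg _ _ HF).
  unfold w. pose proof (w1_shift k a). pose proof (w1_shift l b).
  pose proof (w1_pos (k+a)). pose proof (w1_pos (l+b)). pose proof (w1_pos k). pose proof (w1_pos l).
  assert (w1 (k + a) * w1 (l + b) <= (2 * (1 + IZR a ^ 2) * w1 k) * (2 * (1 + IZR b ^ 2) * w1 l)).
  { apply Rmult_le_compat; lra. }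
  replace (C0 * (2 * (1 + IZR a ^ 2)) * (2 * (1 + IZR b ^ 2)) * (w1 k * w1 l)) with
    (C0 * ((2 * (1 + IZR a ^ 2) * w1 k) * (2 * (1 + IZR b ^ 2) * w1 l))) by ring.
  apply Rmult_le_compat_l; auto.
Qed.

Lemma w1_lim : is_lim_seq (fun N => w1 (Z.of_nat N)) 0.
Proof.
  assert (H : is_lim_seq (fun N => 1 + INR N ^ 2) p_infty).
  { apply is_lim_seq_le_p_loc with INR. exists 0%nat. intros n _.
    pose proof (pos_INR n). nra. apply is_lim_seq_INR. }
  apply is_lim_seq_inv in H. 2: { discriminate. }
  eapply is_lim_seq_ext. 2: apply H. intros n. unfold w1. rewrite <- INR_IZR_INZ. auto.
Qed.

Lemma w1_lim1 : is_lim_seq (fun N => w1 (Z.of_nat N + 1)) 0.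
Proof.
  pose proof w1_lim as H. apply is_lim_seq_incr_1 in H. eapply is_lim_seq_ext. 2: apply H.
  intros n. cbv beta. rewrite Nat2Z.inj_succ. reflexivity.
Qed.

Lemma small_lim (f : nat -> C) (g : nat -> R) : is_lim_seq g 0 -> (forall N, Cmod (f N) <= g N) ->
  CL f 0.
Proof.
  intros Hg Hf. split.
  - apply is_lim_seq_le_le with (fun N => - g N) g; auto.
    + intros N. pose proof (Rabs_Re_le (f N)). specialize (Hf N). apply Rabs_le_between. lra.
    + assert (H := proj1 (is_lim_seq_opp g 0) Hg). simpl in H. replace (Re 0) with (-0) by (simpl; ring). exact H.
  - apply is_lim_seq_le_le with (fun N => - g N) g; auto.
    + intros N. pose proof (Rabs_Im_le (f N)). specialize (Hf N). apply Rabs_le_between. lra.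
    + assert (H := proj1 (is_lim_seq_opp g 0) Hg). simpl in H. replace (Im 0) with (-0) by (simpl; ring). exact H.
Qed.

Lemma edge_bound C0 F N j : Dom C0 F -> Cmod (sumZ N (fun l => F j l)) <= 5 * C0 * w1 j.
Proof.
  intros HF. eapply Rle_trans. apply Cmod_sumZ. fold (sZr N (fun l => Cmod (F j l))).
  apply Rle_trans with (sZr N (fun l => (C0 * w1 j) * w1 l)).
  - apply sZr_le. intros l. pose proof (HF j l) as Hj; unfold w in Hj; rewrite <- Rmult_assoc in Hj; exact Hj.
  - rewrite sZr_scal. pose proof (sZr_w1_le5 N). pose proof (Dom_nonneg _ _ HF).
    pose proof (w1_pos j). 
    replace (5 * C0 * w1 j) with ((C0 * w1 j) * 5) by ring. apply Rmult_le_compat_l; auto. nra.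
Qed.

Lemma sumZ2_shift1 C0 F : Dom C0 F -> sumZ2 (fun k l => F (k + 1)%Z l) = sumZ2 F.
Proof.
  intros HF.
  assert (HF' : Dom (C0 * (2 * (1 + IZR 1 ^ 2)) * (2 * (1 + IZR 0 ^ 2))) (fun k l => F (k + 1)%Z (l + 0)%Z)).
  { apply Dom_shift; auto. }
  assert (HF'' : Dom (C0 * (2 * (1 + IZR 1 ^ 2)) * (2 * (1 + IZR 0 ^ 2))) (fun k l => F (k + 1)%Z l)).
  { intros k l. rewrite <- (Z.add_0_r l) at 1. apply HF'. }
  apply (CL_unique (fun N => SQ N (fun k l => F (k + 1)%Z l))).
  - eapply CL_sumZ2; eauto.
  - eapply CL_ext.
    { intros N. unfold SQ. rewrite (sumZ_shift1 N (fun k => sumZ N (fun l => F k l))).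
      replace (sumZ N (fun k => sumZ N (fun l => F k l)) - sumZ N (fun l => F (- Z.of_nat N)%Z l) +
          sumZ N (fun l => F (Z.of_nat N + 1)%Z l))%C with
        (1 * SQ N F + 1 * (- sumZ N (fun l => F (- Z.of_nat N)%Z l) +
          sumZ N (fun l => F (Z.of_nat N + 1)%Z l)))%C by (unfold SQ; ring).
      reflexivity. }
    replace (sumZ2 F) with (1 * sumZ2 F + 1 * 0)%C by ring.
    apply CL_lin. eapply CL_sumZ2; eauto.
    apply small_lim with (fun N => 5 * C0 * w1 (Z.of_nat N) + 5 * C0 * w1 (Z.of_nat N + 1)).
    + replace 0 with (5 * C0 * 0 + 5 * C0 * 0) by ring.
      apply is_lim_seq_plus'; apply (is_lim_seq_scal_l _ (5 * C0) 0); [apply w1_lim | apply w1_lim1].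
    + intros N. eapply Rle_trans. apply Cmod_triangle. rewrite Cmod_opp.
      pose proof (edge_bound C0 F N (- Z.of_nat N)%Z HF). rewrite w1_opp in H.
      pose proof (edge_bound C0 F N (Z.of_nat N + 1)%Z HF). lra.
Qed.

Lemma Dom_shiftk C0 F a : Dom C0 F -> Dom (C0 * (2 * (1 + IZR a ^ 2)) * (2 * (1 + IZR 0 ^ 2))) (fun k l => F (k + a)%Z l).
Proof.
  intros HF k l. pose proof (Dom_shift C0 F a 0 HF k l). simpl in H. rewrite Z.add_0_r in H. exact H.
Qed.

Lemma sumZ2_shiftk_nat n : forall C0 F, Dom C0 F -> sumZ2 (fun k l => F (k + Z.of_nat n)%Z l) = sumZ2 F.
Proof.
  induction n as [|n IH]; intros C0 F HF.
  - apply sumZ2_ext. intros; simpl. rewrite Z.add_0_r. auto.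
  - pose proof (Dom_shiftk C0 F (Z.of_nat n) HF) as HG.
    rewrite <- (IH _ _ HF).
    rewrite <- (sumZ2_shift1 _ _ HG). apply sumZ2_ext. intros k l. f_equal. lia.
Qed.

Lemma sumZ2_shiftk C0 F a : Dom C0 F -> sumZ2 (fun k l => F (k + a)%Z l) = sumZ2 F.
Proof.
  intros HF. destruct (Z_le_gt_dec 0 a) as [Ha|Ha].
  - replace a with (Z.of_nat (Z.to_nat a)) by lia. eapply sumZ2_shiftk_nat; eauto.
  - pose proof (Dom_shiftk C0 F a HF) as HG.
    rewrite <- (sumZ2_shiftk_nat (Z.to_nat (- a)) _ _ HG).
    symmetry. apply sumZ2_ext. intros k l. f_equal. lia.
Qed.

Lemma Dom_transpose C0 F : Dom C0 F -> Dom C0 (fun k l => F l k).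
Proof. intros HF k l. unfold w. rewrite (Rmult_comm (w1 k)). apply HF. Qed.

Lemma sumZ2_shift C0 F a b : Dom C0 F -> sumZ2 (fun k l => F (k + a)%Z (l + b)%Z) = sumZ2 F.
Proof.
  intros HF.
  pose proof (Dom_shiftk C0 F a HF) as H1.
  set (G := fun k l => F (k + a)%Z l) in *.
  transitivity (sumZ2 G). 2: { eapply sumZ2_shiftk; eauto. }
  rewrite <- (sumZ2_transpose G).
  rewrite <- (sumZ2_transpose (fun k l => F (k + a)%Z (l + b)%Z)).
  apply Dom_transpose in H1.
  rewrite <- (sumZ2_shiftk _ _ b H1). apply sumZ2_ext. intros; unfold G; auto.
Qed.

Definition Dom2 (C0 : R) (F : Z -> Z -> Z -> Z -> C) :=
  forall k l k' l', Cmod (F k l k' l') <= C0 * w k l * w k' l'.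

Lemma Cmod_SQ N G : Cmod (SQ N G) <= SQR N (fun k l => Cmod (G k l)).
Proof.
  unfold SQ, SQR. eapply Rle_trans. apply Cmod_sumZ. fold (sZr N (fun k => Cmod (sumZ N (fun l => G k l)))).
  apply sZr_le. intros k. apply Cmod_sumZ.
Qed.

Lemma SQ_minus N F G : SQ N (fun k l => F k l - G k l)%C = (SQ N F - SQ N G)%C.
Proof.
  replace (SQ N F - SQ N G)%C with (1 * SQ N F + (-1) * SQ N G)%C by ring.
  rewrite <- SQ_lin. unfold SQ. apply sumZ_ext; intros; apply sumZ_ext; intros; ring.
Qed.

Lemma fub_lim C0 F : Dom2 C0 F ->
  CL (fun N => SQ N (fun k l => SQ N (F k l))) (sumZ2 (fun k l => sumZ2 (F k l))).
Proof.
  intros HF.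
  assert (HFx : forall k l, Dom (C0 * w k l) (F k l)).
  { intros k l k' l'. apply HF. }
  assert (HC : 0 <= C0).
  { pose proof (Dom_nonneg _ _ (HFx 0%Z 0%Z)). pose proof (w_pos 0 0). nra. }
  set (h := fun k l => sumZ2 (F k l)).
  assert (Hh : Dom (50 * C0) h).
  { intros k l. unfold h. eapply Rle_trans. apply (sumZ2_bound _ _ (HFx k l)). right; ring. }
  assert (Hd : forall N k l, Cmod (h k l - SQ N (F k l)) <= (2 * C0 * (Lw - SQR N w)) * w k l).
  { intros N k l. destruct (conv_C _ _ (HFx k l)) as [_ [_ [A B]]].
    specialize (A N). specialize (B N).
    eapply Rle_trans. apply Cmod_le_ReIm. unfold h.
    replace (Re (sumZ2 (F k l) - SQ N (F k l))%C) with (Re (sumZ2 (F k l)) - Re (SQ N (F k l))) by (unfold Re; simpl; ring).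
    replace (Im (sumZ2 (F k l) - SQ N (F k l))%C) with (Im (sumZ2 (F k l)) - Im (SQ N (F k l))) by (unfold Im; simpl; ring).
    replace (2 * C0 * (Lw - SQR N w) * w k l) with (C0 * w k l * (Lw - SQR N w) + C0 * w k l * (Lw - SQR N w)) by ring.
    apply Rplus_le_compat; auto. }
  replace (sumZ2 h) with (1 * sumZ2 h + (-1) * 0)%C by ring.
  eapply CL_ext.
  2: { apply CL_lin. apply (CL_sumZ2 _ _ Hh).
       apply small_lim with (fun N => 2 * C0 * (Lw - SQR N w) * 25).
       - replace 0 with (2 * C0 * (Lw - Lw) * 25) by ring.
         apply (is_lim_seq_scal_r _ 25 (2 * C0 * (Lw - Lw))).
         apply (is_lim_seq_scal_l _ (2 * C0) (Lw - Lw)).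
         apply is_lim_seq_minus'. apply is_lim_seq_const. apply Lw_lim.
       - intros N. rewrite <- SQ_minus. eapply Rle_trans. apply Cmod_SQ.
         eapply Rle_trans. apply (SQR_le N). intros k l. apply (Hd N k l).
         rewrite SQR_scal. pose proof (Lw_ge N). pose proof (SQR_w_le N).
         apply Rmult_le_compat_l. nra. auto. }
  intros N. cbv beta. ring.
Qed.

Lemma sumZ_swap4 N (F : Z -> Z -> Z -> Z -> C) :
  SQ N (fun k l => SQ N (F k l)) = SQ N (fun k' l' => SQ N (fun k l => F k l k' l')).
Proof.
  unfold SQ.
  transitivity (sumZ N (fun k => sumZ N (fun k' => sumZ N (fun l => sumZ N (fun l' => F k l k' l'))))).
  { apply sumZ_ext; intros k. apply sumZ_swap. }
  rewrite sumZ_swap. apply sumZ_ext; intros k'.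
  transitivity (sumZ N (fun k => sumZ N (fun l' => sumZ N (fun l => F k l k' l')))).
  { apply sumZ_ext; intros k. apply sumZ_swap. }
  apply sumZ_swap.
Qed.

Lemma fubini C0 F : Dom2 C0 F ->
  sumZ2 (fun k l => sumZ2 (F k l)) = sumZ2 (fun k' l' => sumZ2 (fun k l => F k l k' l')).
Proof.
  intros HF.
  apply (CL_unique (fun N => SQ N (fun k l => SQ N (F k l)))).
  - eapply fub_lim; eauto.
  - eapply CL_ext. intros N. symmetry. apply sumZ_swap4.
    apply (fub_lim C0 (fun k' l' k l => F k l k' l')).
    intros k l k' l'. rewrite Rmult_assoc, (Rmult_comm (w k l)), <- Rmult_assoc. apply HF.
Qed.

Lemma cexpi_mult a b : (cexpi a * cexpi b)%C = cexpi (a + b).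
Proof.
  unfold cexpi, Cmult. rewrite cos_plus, sin_plus. apply injective_projections; simpl; ring.
Qed.
Lemma cexpi_conj a : Cconj (cexpi a) = cexpi (- a).
Proof. unfold cexpi, Cconj. rewrite cos_neg, sin_neg. reflexivity. Qed.
Lemma Cmod_cexpi a : Cmod (cexpi a) = 1.
Proof.
  assert (H : cos a ^ 2 + sin a ^ 2 = 1) by (pose proof (sin2_cos2 a); unfold Rsqr in H; nra).
  unfold Cmod, cexpi, fst, snd. rewrite H. apply sqrt_1.
Qed.
Lemma cexpi_0 : cexpi 0 = RtoC 1.
Proof. unfold cexpi. rewrite cos_0, sin_0. reflexivity. Qed.
Lemma cexpi_eq a b : a = b -> cexpi a = cexpi b.
Proof. intros ->; auto. Qed.

Lemma Cconj_mult (a b : C) : Cconj (a * b)%C = (Cconj a * Cconj b)%C.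
Proof. destruct a, b. unfold Cconj, Cmult; simpl. apply injective_projections; simpl; ring. Qed.
Lemma Cconj_plus (a b : C) : Cconj (a + b)%C = (Cconj a + Cconj b)%C.
Proof. destruct a, b. unfold Cconj, Cplus; simpl. apply injective_projections; simpl; ring. Qed.
Lemma Cconj_invol (a : C) : Cconj (Cconj a) = a.
Proof. destruct a. unfold Cconj; simpl. apply injective_projections; simpl; ring. Qed.
Lemma Cconj_R (r : R) : Cconj (RtoC r) = RtoC r.
Proof. unfold Cconj, RtoC; simpl. apply injective_projections; simpl; ring. Qed.
Lemma Cconj_Ci : Cconj Ci = (- Ci)%C.
Proof. unfold Cconj, Ci; simpl. apply injective_projections; simpl; ring. Qed.
Lemma Cconj_z_z (z : C) : (Cconj z * z)%C = RtoC (Re z ^ 2 + Im z ^ 2).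
Proof. destruct z. unfold Cconj, Cmult, RtoC, Re, Im; simpl. apply injective_projections; simpl; ring. Qed.
Lemma Cmod_Ci_R (r : R) : Cmod (Ci * RtoC r)%C = Rabs r.
Proof.
  rewrite Cmod_mult. replace (Cmod Ci) with 1. rewrite Cmod_R. ring.
  unfold Cmod, Ci, fst, snd. replace (0 ^ 2 + 1 ^ 2) with 1 by ring. rewrite sqrt_1. auto.
Qed.

Lemma nonneg_from a c b : 0 <= a -> a <= c * b -> 0 < b -> 0 <= c.
Proof. intros. destruct (Rle_lt_dec 0 c); auto. nra. Qed.

Definition Rapid (f : coefs) : Prop := forall j : nat, exists C0, forall k l, Cmod (f k l) <= C0 * w k l ^ j.

Lemma Rapid_get f j : Rapid f -> exists C0, 0 <= C0 /\ forall k l, Cmod (f k l) <= C0 * w k l ^ j.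
Proof.
  intros H. destruct (H j) as [C0 HC]. exists C0. split; auto.
  specialize (HC 0%Z 0%Z). pose proof (Cmod_ge_0 (f 0%Z 0%Z)).
  pose proof (pow_lt _ j (w_pos 0 0)). destruct (Rle_lt_dec 0 C0); auto. nra.
Qed.

Lemma Rapid_Dom f : Rapid f -> exists C0, Dom C0 f.
Proof.
  intros H. destruct (H 1%nat) as [C0 HC]. exists C0. intros k l. rewrite <- (pow_1 (w k l)). auto.
Qed.

Lemma peetre2 k l m n : w k l * w (m - k) (n - l) <= 4 * w m n.
Proof.
  assert (P : forall a b : Z, w1 a * w1 (b - a) <= 2 * w1 b).
  { intros a b. unfold w1. rewrite minus_IZR.
    pose proof (peetre1 (IZR a) (IZR b - IZR a)).
    replace (IZR a + (IZR b - IZR a)) with (IZR b) in H by ring.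
    assert (0 < 1 + IZR a ^ 2) by nra. assert (0 < 1 + (IZR b - IZR a) ^ 2) by nra.
    assert (0 < 1 + IZR b ^ 2) by nra.
    rewrite <- Rinv_mult.
    apply (Rmult_le_reg_r ((1 + IZR a ^ 2) * (1 + (IZR b - IZR a) ^ 2) * (1 + IZR b ^ 2))). nra.
    field_simplify; try lra. }
  unfold w. pose proof (P k m). pose proof (P l n).
  pose proof (w1_pos k). pose proof (w1_pos l). pose proof (w1_pos m). pose proof (w1_pos n).
  pose proof (w1_pos (m - k)). pose proof (w1_pos (n - l)).
  replace (w1 k * w1 l * (w1 (m - k) * w1 (n - l))) with ((w1 k * w1 (m - k)) * (w1 l * w1 (n - l))) by ring.
  replace (4 * (w1 m * w1 n)) with ((2 * w1 m) * (2 * w1 n)) by ring.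
  apply Rmult_le_compat; nra.
Qed.

Lemma w_opp k l : w (- k) (- l) = w k l.
Proof. unfold w. rewrite !w1_opp. auto. Qed.

Lemma schwartz_rapid p : schwartz p -> Rapid p.
Proof.
  intros Hs j. destruct (Hs (4 * j)%nat) as [M HM]. exists M. intros m n.
  specialize (HM m n).
  set (b := 1 + Rabs (IZR m) + Rabs (IZR n)) in *.
  assert (Hb : 1 <= b) by (unfold b; pose proof (Rabs_pos (IZR m)); pose proof (Rabs_pos (IZR n)); lra).
  assert (Hrho : (1 + IZR m ^ 2) * (1 + IZR n ^ 2) <= b ^ 4).
  { unfold b. pose proof (Rabs_pos (IZR m)); pose proof (Rabs_pos (IZR n)).
    replace (IZR m ^ 2) with (Rabs (IZR m) ^ 2) by apply pow2_abs.
    replace (IZR n ^ 2) with (Rabs (IZR n) ^ 2) by apply pow2_abs.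
    set (x := Rabs (IZR m)) in *. set (y := Rabs (IZR n)) in *.
    replace ((1 + x + y) ^ 4) with ((1 + x + y) ^ 2 * (1 + x + y) ^ 2) by ring.
    apply Rmult_le_compat; nra. }
  assert (Hw : w m n = / ((1 + IZR m ^ 2) * (1 + IZR n ^ 2))).
  { unfold w, w1. rewrite Rinv_mult. auto. }
  assert (H1 : 1 <= w m n * b ^ 4).
  { rewrite Hw. apply (Rmult_le_reg_l ((1 + IZR m ^ 2) * (1 + IZR n ^ 2))). nra.
    field_simplify. lra. nra. }
  assert (H2 : 1 <= w m n ^ j * b ^ (4 * j)).
  { rewrite pow_mult, <- Rpow_mult_distr. apply pow_R1_Rle. auto. }
  pose proof (Cmod_ge_0 (p m n)).
  assert (Hbp : 0 < b ^ (4 * j)) by (apply pow_lt; lra).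
  assert (0 <= M) by (pose proof (Rmult_le_pos _ _ (Rlt_le _ _ Hbp) H); lra).
  apply Rle_trans with (Cmod (p m n) * (w m n ^ j * b ^ (4 * j))).
  { rewrite <- (Rmult_1_r (Cmod (p m n))) at 1. apply Rmult_le_compat_l; auto. }
  replace (Cmod (p m n) * (w m n ^ j * b ^ (4 * j))) with (w m n ^ j * (b ^ (4 * j) * Cmod (p m n))) by ring.
  rewrite Rmult_comm. apply Rmult_le_compat_r; auto. left; apply pow_lt, w_pos.
Qed.

Definition lin2 (a : C) (x : coefs) (b : C) (y : coefs) : coefs := fun m n => (a * x m n + b * y m n)%C.

Lemma Rapid_lin a x b y : Rapid x -> Rapid y -> Rapid (lin2 a x b y).
Proof.
  intros Hx Hy j. destruct (Hx j) as [C1 H1]. destruct (Hy j) as [C2 H2].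
  exists (Cmod a * C1 + Cmod b * C2). intros k l. unfold lin2.
  eapply Rle_trans. apply Cmod_triangle. rewrite !Cmod_mult.
  pose proof (H1 k l). pose proof (H2 k l). pose proof (Cmod_ge_0 a). pose proof (Cmod_ge_0 b).
  pose proof (Cmod_ge_0 (x k l)). pose proof (Cmod_ge_0 (y k l)). nra.
Qed.

Lemma Rapid_d1 x : Rapid x -> Rapid (d1 x).
Proof.
  intros Hx j. destruct (Hx (S j)) as [C1 H1]. exists (2 * PI * C1). intros k l. unfold d1.
  rewrite Cmod_mult, Cmod_Ci_R. specialize (H1 k l). simpl in H1.
  assert (Hk : Rabs (IZR k) * w k l <= 1).
  { unfold w, w1. pose proof (Rabs_pos (IZR k)).
    assert (Rabs (IZR k) <= 1 + IZR k ^ 2).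
    { replace (IZR k ^ 2) with (Rabs (IZR k) ^ 2) by apply pow2_abs. nra. }
    assert (0 < 1 + IZR k ^ 2) by nra. assert (0 < 1 + IZR l ^ 2) by nra.
    rewrite <- Rinv_mult. apply (Rmult_le_reg_r ((1 + IZR k ^ 2) * (1 + IZR l ^ 2))). nra.
    field_simplify; nra. }
  rewrite Rabs_mult, Rabs_mult, (Rabs_right 2), (Rabs_right PI) by (pose proof PI_RGT_0; lra).
  pose proof (Cmod_ge_0 (x k l)). pose proof (pow_lt _ j (w_pos k l)). pose proof PI_RGT_0.
  pose proof (Rabs_pos (IZR k)). pose proof (w_pos k l).
  assert (0 <= C1) by (apply (nonneg_from (Cmod (x k l)) C1 (w k l * w k l ^ j)); auto; apply Rmult_lt_0_compat; auto).
  apply Rle_trans with (2 * PI * Rabs (IZR k) * (C1 * (w k l * w k l ^ j))).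
  { apply Rmult_le_compat_l; [|auto]. apply Rmult_le_pos; nra. }
  replace (2 * PI * Rabs (IZR k) * (C1 * (w k l * w k l ^ j))) with
    (2 * PI * C1 * w k l ^ j * (Rabs (IZR k) * w k l)) by ring.
  rewrite <- (Rmult_1_r (2 * PI * C1 * w k l ^ j)) at 2. apply Rmult_le_compat_l; auto.
  apply Rmult_le_pos; [apply Rmult_le_pos|]; nra.
Qed.

Lemma Rapid_d2 x : Rapid x -> Rapid (d2 x).
Proof.
  intros Hx j. destruct (Hx (S j)) as [C1 H1]. exists (2 * PI * C1). intros k l. unfold d2.
  rewrite Cmod_mult, Cmod_Ci_R. specialize (H1 k l). simpl in H1.
  assert (Hk : Rabs (IZR l) * w k l <= 1).
  { unfold w, w1. pose proof (Rabs_pos (IZR l)).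
    assert (Rabs (IZR l) <= 1 + IZR l ^ 2).
    { replace (IZR l ^ 2) with (Rabs (IZR l) ^ 2) by apply pow2_abs. nra. }
    assert (0 < 1 + IZR k ^ 2) by nra. assert (0 < 1 + IZR l ^ 2) by nra.
    rewrite <- Rinv_mult. apply (Rmult_le_reg_r ((1 + IZR k ^ 2) * (1 + IZR l ^ 2))). nra.
    field_simplify; nra. }
  rewrite Rabs_mult, Rabs_mult, (Rabs_right 2), (Rabs_right PI) by (pose proof PI_RGT_0; lra).
  pose proof (Cmod_ge_0 (x k l)). pose proof (pow_lt _ j (w_pos k l)). pose proof PI_RGT_0.
  pose proof (Rabs_pos (IZR l)). pose proof (w_pos k l).
  assert (0 <= C1) by (apply (nonneg_from (Cmod (x k l)) C1 (w k l * w k l ^ j)); auto; apply Rmult_lt_0_compat; auto).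
  apply Rle_trans with (2 * PI * Rabs (IZR l) * (C1 * (w k l * w k l ^ j))).
  { apply Rmult_le_compat_l; [|auto]. apply Rmult_le_pos; nra. }
  replace (2 * PI * Rabs (IZR l) * (C1 * (w k l * w k l ^ j))) with
    (2 * PI * C1 * w k l ^ j * (Rabs (IZR l) * w k l)) by ring.
  rewrite <- (Rmult_1_r (2 * PI * C1 * w k l ^ j)) at 2. apply Rmult_le_compat_l; auto.
  apply Rmult_le_pos; [apply Rmult_le_pos|]; nra.
Qed.

Lemma Rapid_star th x : Rapid x -> Rapid (nct_star th x).
Proof.
  intros Hx j. destruct (Hx j) as [C1 H1]. exists C1. intros k l. unfold nct_star.
  rewrite Cmod_mult, Cmod_cexpi, Cmod_conj, Rmult_1_r, <- (w_opp k l). apply H1.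
Qed.

Definition Mint th (f g : coefs) m n : Z -> Z -> C :=
  fun k l => (f k l * g (m - k)%Z (n - l)%Z * cexpi (2 * PI * th * IZR l * IZR (m - k)))%C.

Lemma mul_eq th f g m n : nct_mul th f g m n = sumZ2 (Mint th f g m n).
Proof. reflexivity. Qed.

Lemma Cmod_abe a b t : Cmod (a * b * cexpi t)%C = Cmod a * Cmod b.
Proof. rewrite !Cmod_mult, Cmod_cexpi. ring. Qed.

Lemma Mint_Dom th f g m n : Rapid f -> Rapid g -> exists C0, Dom C0 (Mint th f g m n).
Proof.
  intros Hf Hg. destruct (Rapid_get f 1 Hf) as [C1 [P1 H1]]. destruct (Rapid_get g 0 Hg) as [C2 [P2 H2]].
  exists (C1 * C2). intros k l. unfold Mint. rewrite Cmod_abe.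
  specialize (H1 k l). specialize (H2 (m - k)%Z (n - l)%Z). rewrite pow_1 in H1. rewrite pow_O in H2.
  pose proof (Cmod_ge_0 (f k l)). pose proof (Cmod_ge_0 (g (m-k)%Z (n-l)%Z)). pose proof (w_pos k l).
  replace (C1 * C2 * w k l) with ((C1 * w k l) * (C2 * 1)) by ring.
  apply Rmult_le_compat; auto.
Qed.

Lemma Rapid_mul th f g : Rapid f -> Rapid g -> Rapid (nct_mul th f g).
Proof.
  intros Hf Hg j. destruct (Rapid_get f (S j) Hf) as [C1 [P1 H1]]. destruct (Rapid_get g j Hg) as [C2 [P2 H2]].
  exists (50 * (C1 * C2 * 4 ^ j)). intros m n. rewrite mul_eq.
  replace (50 * (C1 * C2 * 4 ^ j) * w m n ^ j) with (50 * (C1 * C2 * 4 ^ j * w m n ^ j)) by ring.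
  apply sumZ2_bound. intros k l. unfold Mint. rewrite Cmod_abe.
  specialize (H1 k l). specialize (H2 (m - k)%Z (n - l)%Z). simpl in H1.
  pose proof (Cmod_ge_0 (f k l)). pose proof (Cmod_ge_0 (g (m-k)%Z (n-l)%Z)). pose proof (w_pos k l).
  pose proof (w_pos (m - k) (n - l)). pose proof (peetre2 k l m n).
  assert (HP : (w k l * w (m - k) (n - l)) ^ j <= (4 * w m n) ^ j).
  { apply pow_incr. split; auto. apply Rmult_le_pos; lra. }
  rewrite Rpow_mult_distr in HP. rewrite Rpow_mult_distr in HP.
  apply Rle_trans with ((C1 * (w k l * w k l ^ j)) * (C2 * w (m - k) (n - l) ^ j)).
  { apply Rmult_le_compat; auto. }
  replace ((C1 * (w k l * w k l ^ j)) * (C2 * w (m - k) (n - l) ^ j)) with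
    ((C1 * C2 * w k l) * (w k l ^ j * w (m - k) (n - l) ^ j)) by ring.
  replace (C1 * C2 * 4 ^ j * w m n ^ j * w k l) with ((C1 * C2 * w k l) * (4 ^ j * w m n ^ j)) by ring.
  apply Rmult_le_compat_l; auto. apply Rmult_le_pos; [apply Rmult_le_pos|]; lra.
Qed.

Lemma Rapid_zero : Rapid zero_coefs.
Proof. intros j. exists 0. intros k l. unfold zero_coefs. rewrite Cmod_0. lra. Qed.

Lemma mul_lin_l th a x b y z : Rapid x -> Rapid y -> Rapid z ->
  nct_mul th (lin2 a x b y) z = lin2 a (nct_mul th x z) b (nct_mul th y z).
Proof.
  intros Hx Hy Hz. apply functional_extensionality; intro m; apply functional_extensionality; intro n.
  unfold lin2 at 2. rewrite !mul_eq.
  destruct (Mint_Dom th x z m n Hx Hz) as [C1 D1]. destruct (Mint_Dom th y z m n Hy Hz) as [C2 D2].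
  rewrite <- (sumZ2_lin _ _ _ _ _ _ D1 D2). apply sumZ2_ext. intros k l. unfold Mint, lin2. ring.
Qed.

Lemma mul_lin_r th a x b y z : Rapid x -> Rapid y -> Rapid z ->
  nct_mul th z (lin2 a x b y) = lin2 a (nct_mul th z x) b (nct_mul th z y).
Proof.
  intros Hx Hy Hz. apply functional_extensionality; intro m; apply functional_extensionality; intro n.
  unfold lin2 at 2. rewrite !mul_eq.
  destruct (Mint_Dom th z x m n Hz Hx) as [C1 D1]. destruct (Mint_Dom th z y m n Hz Hy) as [C2 D2].
  rewrite <- (sumZ2_lin _ _ _ _ _ _ D1 D2). apply sumZ2_ext. intros k l. unfold Mint, lin2. ring.
Qed.

Lemma star_lin th a x b y : nct_star th (lin2 a x b y) = lin2 (Cconj a) (nct_star th x) (Cconj b) (nct_star th y).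
Proof.
  apply functional_extensionality; intro m; apply functional_extensionality; intro n.
  unfold nct_star, lin2. rewrite Cconj_plus, !Cconj_mult. ring.
Qed.

Lemma int_lin a x b y : nct_int (lin2 a x b y) = (a * nct_int x + b * nct_int y)%C.
Proof. reflexivity. Qed.

Lemma leibniz1 th x y : Rapid x -> Rapid y ->
  d1 (nct_mul th x y) = lin2 1 (nct_mul th (d1 x) y) 1 (nct_mul th x (d1 y)).
Proof.
  intros Hx Hy. apply functional_extensionality; intro m; apply functional_extensionality; intro n.
  unfold lin2. unfold Pilot.Defs.d1 at 1. rewrite !mul_eq.
  destruct (Mint_Dom th (d1 x) y m n (Rapid_d1 _ Hx) Hy) as [C1 D1].
  destruct (Mint_Dom th x (d1 y) m n Hx (Rapid_d1 _ Hy)) as [C2 D2].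
  destruct (Mint_Dom th x y m n Hx Hy) as [C3 D3].
  rewrite <- (sumZ2_lin _ _ _ _ _ _ D1 D2). rewrite <- (sumZ2_scal _ _ _ D3).
  apply sumZ2_ext. intros k l. unfold Mint, Pilot.Defs.d1.
  rewrite ?minus_IZR, ?RtoC_mult, ?RtoC_minus. ring.
Qed.

Lemma leibniz2 th x y : Rapid x -> Rapid y ->
  d2 (nct_mul th x y) = lin2 1 (nct_mul th (d2 x) y) 1 (nct_mul th x (d2 y)).
Proof.
  intros Hx Hy. apply functional_extensionality; intro m; apply functional_extensionality; intro n.
  unfold lin2. unfold Pilot.Defs.d2 at 1. rewrite !mul_eq.
  destruct (Mint_Dom th (d2 x) y m n (Rapid_d2 _ Hx) Hy) as [C1 D1].
  destruct (Mint_Dom th x (d2 y) m n Hx (Rapid_d2 _ Hy)) as [C2 D2].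
  destruct (Mint_Dom th x y m n Hx Hy) as [C3 D3].
  rewrite <- (sumZ2_lin _ _ _ _ _ _ D1 D2). rewrite <- (sumZ2_scal _ _ _ D3).
  apply sumZ2_ext. intros k l. unfold Mint, Pilot.Defs.d2.
  rewrite ?minus_IZR, ?RtoC_mult, ?RtoC_minus. ring.
Qed.

Ltac izr := repeat rewrite ?plus_IZR, ?minus_IZR, ?opp_IZR, ?mult_IZR.

Lemma Dom_conj C0 F : Dom C0 F -> Dom C0 (fun k l => Cconj (F k l)).
Proof. intros H k l. rewrite Cmod_conj. apply H. Qed.

Lemma Dom_scal_r C0 F c : Dom C0 F -> Dom (C0 * Cmod c) (fun k l => F k l * c)%C.
Proof.
  intros H k l. rewrite Cmod_mult. pose proof (H k l). pose proof (Cmod_ge_0 c). pose proof (w_pos k l).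
  replace (C0 * Cmod c * w k l) with (C0 * w k l * Cmod c) by ring. apply Rmult_le_compat_r; auto.
Qed.

Lemma star_mul th x y : Rapid x -> Rapid y ->
  nct_star th (nct_mul th x y) = nct_mul th (nct_star th y) (nct_star th x).
Proof.
  intros Hx Hy. apply functional_extensionality; intro m; apply functional_extensionality; intro n.
  unfold nct_star at 1. rewrite !mul_eq.
  destruct (Mint_Dom th x y (- m) (- n) Hx Hy) as [C1 D1].
  destruct (Mint_Dom th (nct_star th y) (nct_star th x) m n (Rapid_star _ _ Hy) (Rapid_star _ _ Hx)) as [C2 D2].
  rewrite (sumZ2_conj _ _ D1).
  rewrite <- (sumZ2_scal_r _ _ _ (Dom_conj _ _ D1)).
  rewrite <- (sumZ2_shift _ _ m n D2).
  apply sumZ2_ext. intros k l. unfold Mint, nct_star.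
  replace (- (k + m))%Z with (- m - k)%Z by ring.
  replace (- (l + n))%Z with (- n - l)%Z by ring.
  replace (- (m - (k + m)))%Z with k by ring.
  replace (- (n - (l + n)))%Z with l by ring.
  rewrite !Cconj_mult, cexpi_conj.
  match goal with |- (?X * ?Y * cexpi ?a * cexpi ?b = ?U * cexpi ?c * (?V * cexpi ?d) * cexpi ?e)%C =>
    transitivity (X * Y * cexpi (a + b))%C; [rewrite <- cexpi_mult; ring|];
    transitivity (X * Y * cexpi (c + d + e))%C; [|rewrite <- !cexpi_mult; ring]
  end.
  f_equal. apply cexpi_eq. izr. ring.
Qed.

Lemma trace th x y : Rapid x -> Rapid y -> nct_int (nct_mul th x y) = nct_int (nct_mul th y x).
Proof.
  intros Hx Hy. unfold nct_int. rewrite !mul_eq.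
  rewrite <- (sumZ2_neg (Mint th y x 0 0)).
  apply sumZ2_ext. intros k l. unfold Mint.
  replace (0 - - k)%Z with k by ring. replace (0 - - l)%Z with l by ring.
  replace (0 - k)%Z with (- k)%Z by ring. replace (0 - l)%Z with (- l)%Z by ring.
  replace (2 * PI * th * IZR (- l) * IZR k) with (2 * PI * th * IZR l * IZR (- k)) by (izr; ring). ring.
Qed.

Lemma mul_assoc th f g h : Rapid f -> Rapid g -> Rapid h ->
  nct_mul th (nct_mul th f g) h = nct_mul th f (nct_mul th g h).
Proof.
  intros Hf Hg Hh. apply functional_extensionality; intro m; apply functional_extensionality; intro n.
  rewrite !mul_eq.
  set (F := fun k l k' l' => (Mint th f g k l k' l' * (h (m - k)%Z (n - l)%Z * cexpi (2 * PI * th * IZR l * IZR (m - k))))%C).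
  transitivity (sumZ2 (fun k l => sumZ2 (F k l))).
  { apply sumZ2_ext. intros k l. unfold Mint at 1. rewrite mul_eq.
    destruct (Mint_Dom th f g k l Hf Hg) as [C1 D1].
    rewrite <- Cmult_assoc. rewrite <- (sumZ2_scal_r _ _ _ D1). unfold F. apply sumZ2_ext. intros; ring. }
  destruct (Rapid_get f 2 Hf) as [C1 [P1 H1]].
  destruct (Rapid_get g 1 Hg) as [C2 [P2 H2]].
  destruct (Rapid_get h 0 Hh) as [C3 [P3 H3]].
  assert (D2 : Dom2 (4 * C1 * C2 * C3) F).
  { intros k l k' l'. unfold F, Mint. rewrite Cmod_mult, Cmod_abe, Cmod_mult, Cmod_cexpi, Rmult_1_r.
    specialize (H1 k' l'). specialize (H2 (k - k')%Z (l - l')%Z). specialize (H3 (m - k)%Z (n - l)%Z).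
    rewrite pow_O in H3. rewrite pow_1 in H2.
    pose proof (peetre2 k' l' k l). pose proof (w_pos k l). pose proof (w_pos k' l').
    pose proof (w_pos (k - k') (l - l')).
    pose proof (Cmod_ge_0 (f k' l')). pose proof (Cmod_ge_0 (g (k - k')%Z (l - l')%Z)).
    pose proof (Cmod_ge_0 (h (m - k)%Z (n - l)%Z)).
    apply Rle_trans with ((C1 * w k' l' ^ 2) * (C2 * w (k - k') (l - l')) * (C3 * 1)).
    { apply Rmult_le_compat; auto. apply Rmult_le_pos; auto. apply Rmult_le_compat; auto. }
    replace ((C1 * w k' l' ^ 2) * (C2 * w (k - k') (l - l')) * (C3 * 1)) with
      ((C1 * C2 * C3 * w k' l') * (w k' l' * w (k - k') (l - l'))) by ring.
    replace (4 * C1 * C2 * C3 * w k l * w k' l') with ((C1 * C2 * C3 * w k' l') * (4 * w k l)) by ring.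
    apply Rmult_le_compat_l; auto. apply Rmult_le_pos; [apply Rmult_le_pos; [apply Rmult_le_pos|]|]; lra. }
  rewrite (fubini _ _ D2).
  apply sumZ2_ext. intros k' l'.
  assert (DG : Dom (4 * C1 * C2 * C3 * w k' l') (fun k l => F k l k' l')).
  { intros k l. replace (4 * C1 * C2 * C3 * w k' l' * w k l) with (4 * C1 * C2 * C3 * w k l * w k' l') by ring. apply D2. }
  rewrite <- (sumZ2_shift _ _ k' l' DG).
  unfold Mint. rewrite mul_eq.
  destruct (Mint_Dom th g h (m - k') (n - l') Hg Hh) as [C4 D4].
  transitivity ((f k' l' * cexpi (2 * PI * th * IZR l' * IZR (m - k'))) * sumZ2 (Mint th g h (m - k') (n - l')))%C.
  2: ring.
  rewrite <- (sumZ2_scal _ _ _ D4). apply sumZ2_ext. intros k l.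
  unfold F, Mint.
  replace (k + k' - k')%Z with k by ring. replace (l + l' - l')%Z with l by ring.
  replace (m - (k + k'))%Z with (m - k' - k)%Z by ring. replace (n - (l + l'))%Z with (n - l' - l)%Z by ring.
  match goal with |- (?X * ?Y * cexpi ?a * (?Z * cexpi ?b) = ?U * cexpi ?c * (?V * ?W * cexpi ?d))%C =>
    transitivity (X * Y * Z * cexpi (a + b))%C; [rewrite <- cexpi_mult; ring|];
    transitivity (X * Y * Z * cexpi (c + d))%C; [|rewrite <- !cexpi_mult; ring]
  end.
  f_equal. apply cexpi_eq. izr. ring.
Qed.

Lemma sumZ2_R_nonneg C0 (g : Z -> Z -> R) : Dom C0 (fun k l => RtoC (g k l)) -> (forall k l, 0 <= g k l) ->
  Im (sumZ2 (fun k l => RtoC (g k l))) = 0 /\ 0 <= Re (sumZ2 (fun k l => RtoC (g k l))).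
Proof.
  intros HD Hg. destruct (conv_C _ _ HD) as [A [B _]]. split.
  - assert (B' : is_lim_seq (fun N => Im (SQ N (fun k l => RtoC (g k l)))) 0).
    { eapply is_lim_seq_ext. 2: apply is_lim_seq_const. intros N. rewrite Im_SQ. simpl.
      rewrite (SQR_ext N _ (fun k l => 0 * 0)). rewrite SQR_scal. ring. intros; simpl; ring. }
    apply is_lim_seq_unique in B. apply is_lim_seq_unique in B'. rewrite B in B'. injection B'; auto.
  - assert (A' : is_lim_seq (fun N => SQR N g) (Re (sumZ2 (fun k l => RtoC (g k l))))).
    { eapply is_lim_seq_ext. 2: apply A. intros N. cbv beta. rewrite Re_SQ. auto. }
    assert (H := is_lim_seq_le _ _ _ _ (fun N => SQR_nonneg N g Hg) (is_lim_seq_const 0) A').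
    simpl in H. apply H.
Qed.

Lemma positivity th x : Rapid x ->
  Im (nct_int (nct_mul th (nct_star th x) x)) = 0 /\ 0 <= Re (nct_int (nct_mul th (nct_star th x) x)).
Proof.
  intros Hx. unfold nct_int. rewrite mul_eq.
  destruct (Mint_Dom th (nct_star th x) x 0 0 (Rapid_star _ _ Hx) Hx) as [C0 D0].
  set (g := fun k l => Re (x (- k)%Z (- l)%Z) ^ 2 + Im (x (- k)%Z (- l)%Z) ^ 2).
  assert (E : forall k l, Mint th (nct_star th x) x 0 0 k l = RtoC (g k l)).
  { intros k l. unfold Mint, nct_star, g. replace (0 - k)%Z with (- k)%Z by ring.
    replace (0 - l)%Z with (- l)%Z by ring. rewrite <- Cconj_z_z.
    transitivity (Cconj (x (- k)%Z (- l)%Z) * x (- k)%Z (- l)%Z *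
       (cexpi (2 * PI * th * IZR k * IZR l) * cexpi (2 * PI * th * IZR l * IZR (- k))))%C. ring.
    rewrite cexpi_mult. replace (2 * PI * th * IZR k * IZR l + 2 * PI * th * IZR l * IZR (- k)) with 0
      by (izr; ring). rewrite cexpi_0. ring. }
  rewrite (sumZ2_ext _ _ E). apply (sumZ2_R_nonneg C0).
  - intros k l. rewrite <- E. apply D0.
  - intros k l. unfold g. nra.
Qed.

Lemma star_d1 th p : p = nct_star th p -> nct_star th (d1 p) = d1 p.
Proof.
  intros Hp. apply functional_extensionality; intro m; apply functional_extensionality; intro n.
  assert (Hmn : p m n = nct_star th p m n) by (rewrite <- Hp; auto).
  unfold Pilot.Defs.d1 at 2. rewrite Hmn. unfold nct_star, Pilot.Defs.d1.
  rewrite !Cconj_mult, Cconj_Ci, Cconj_R, opp_IZR.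
  rewrite !RtoC_mult, RtoC_opp. ring.
Qed.

Lemma star_d2 th p : p = nct_star th p -> nct_star th (d2 p) = d2 p.
Proof.
  intros Hp. apply functional_extensionality; intro m; apply functional_extensionality; intro n.
  assert (Hmn : p m n = nct_star th p m n) by (rewrite <- Hp; auto).
  unfold Pilot.Defs.d2 at 2. rewrite Hmn. unfold nct_star, Pilot.Defs.d2.
  rewrite !Cconj_mult, Cconj_Ci, Cconj_R, opp_IZR.
  rewrite !RtoC_mult, RtoC_opp. ring.
Qed.

Lemma mul_zero_r th x : nct_mul th x zero_coefs = zero_coefs.
Proof.
  apply functional_extensionality; intro m; apply functional_extensionality; intro n.
  rewrite mul_eq. unfold zero_coefs at 2. transitivity (sumZ2 (fun _ _ => RtoC 0)). apply sumZ2_ext. intros; unfold Mint, zero_coefs; ring. apply sumZ2_zero.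
Qed.

Lemma star_zero th : nct_star th zero_coefs = zero_coefs.
Proof.
  apply functional_extensionality; intro m; apply functional_extensionality; intro n.
  unfold nct_star, zero_coefs. rewrite Cconj_R. ring.
Qed.

#[export] Hint Resolve Rapid_mul Rapid_lin Rapid_star Rapid_d1 Rapid_d2 Rapid_zero : rapid.


Lemma K1 (th : R) (p : coefs) (Hp : Rapid p) (Hpp : p = nct_mul th p p) (Hps : p = nct_star th p) X Y : Rapid X -> Rapid Y -> Y = lin2 1 (nct_mul th Y p) 1 (nct_mul th p Y) ->
  nct_int (nct_mul th X Y) = (nct_int (nct_mul th p (nct_mul th X Y)) + nct_int (nct_mul th p (nct_mul th Y X)))%C.
Proof.
  intros HX HY LY.
  transitivity (nct_int (nct_mul th X (lin2 1 (nct_mul th Y p) 1 (nct_mul th p Y)))). { rewrite <- LY. reflexivity. }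
  rewrite mul_lin_r by auto with rapid. rewrite int_lin, !Cmult_1_l.
  f_equal.
  - rewrite <- mul_assoc by auto with rapid. apply trace; auto with rapid.
  - rewrite <- mul_assoc by auto with rapid. rewrite trace by auto with rapid.
    rewrite <- mul_assoc by auto with rapid. apply trace; auto with rapid.
Qed.

Lemma Mpp (th : R) (p : coefs) (Hp : Rapid p) (Hpp : p = nct_mul th p p) (Hps : p = nct_star th p) X : Rapid X -> nct_mul th p (nct_mul th p X) = nct_mul th p X.
Proof. intros HX. rewrite <- mul_assoc by auto. rewrite <- Hpp. auto. Qed.

Lemma K2 (th : R) (p : coefs) (Hp : Rapid p) (Hpp : p = nct_mul th p p) (Hps : p = nct_star th p) X Y : Rapid X -> Rapid Y -> nct_star th X = X ->
  nct_int (nct_mul th (nct_star th (nct_mul th X p)) (nct_mul th Y p)) = nct_int (nct_mul th p (nct_mul th X Y)).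
Proof.
  intros HX HY SX. rewrite star_mul by auto. rewrite <- Hps, SX.
  rewrite <- mul_assoc by auto with rapid. rewrite trace by auto with rapid.
  rewrite <- mul_assoc by auto with rapid. rewrite (Mpp th p Hp Hpp Hps) by auto.
  rewrite mul_assoc by auto with rapid. auto.
Qed.

Lemma K3 (th : R) (p : coefs) (Hp : Rapid p) (Hpp : p = nct_mul th p p) (Hps : p = nct_star th p) X Y : Rapid X -> Rapid Y -> nct_star th X = X ->
  nct_int (nct_mul th (nct_star th (nct_mul th p X)) (nct_mul th p Y)) = nct_int (nct_mul th p (nct_mul th Y X)).
Proof.
  intros HX HY SX. rewrite star_mul by auto. rewrite <- Hps, SX.
  rewrite mul_assoc by auto with rapid.
  rewrite (Mpp th p Hp Hpp Hps) by auto. rewrite trace by auto with rapid. rewrite mul_assoc by auto with rapid. auto.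
Qed.


Lemma inv_tau (tau : C) : 0 < Im tau -> (/ (tau - Cconj tau))%C = (0, - / (2 * Im tau)).
Proof.
  intros H. destruct tau as [x y]. unfold Im in *; simpl in *.
  unfold Cinv, Cminus, Cplus, Copp, Cconj; simpl. apply injective_projections; simpl; field; repeat split; intro; nra.
Qed.

Lemma arith (x y : R) (Paa Pbb P Q : C) : 0 < y ->
  let tau := (x, y) in
  let k := (0, - / (2 * y)) in
  let al := (k * tau)%C in let be := (- k)%C in
  let N1 := (Cconj al * (al * Paa + be * P) + Cconj be * (al * Q + be * Pbb))%C in
  let N2 := (Cconj al * (al * Paa + be * Q) + Cconj be * (al * P + be * Pbb))%C in
  let S := ((/ (2 * PI))%R * ((sqrt_det_g tau * ginv tau false false)%R * (Paa + Paa) +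
     ((sqrt_det_g tau * ginv tau false true)%R * (P + Q) +
     ((sqrt_det_g tau * ginv tau true false)%R * (Q + P) +
     ((sqrt_det_g tau * ginv tau true true)%R * (Pbb + Pbb) + 0)))))%C in
  let ps := (- / ((2 * PI)%R * Ci) * (1 * P + (-1) * Q))%C in
  (N1 + N2 = RtoC (PI / (2 * y)) * S)%C /\ (N1 - N2 = RtoC (PI / y) * ps)%C.
Proof.
  intros Hy tau k al be N1 N2 S ps.
  pose proof PI_RGT_0 as HPI.
  assert (Ht : Cmod tau ^ 2 = x ^ 2 + y ^ 2) by (rewrite Cmod2_alt; reflexivity).
  assert (Hinv : (/ ((2 * PI)%R * Ci))%C = (0, - / (2 * PI))).
  { unfold Cinv, Cmult, Ci, RtoC; simpl. apply injective_projections; simpl; field; repeat split; intro; nra. }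
  unfold ps. rewrite Hinv. unfold S, sqrt_det_g, ginv. rewrite Ht.
  unfold N1, N2, al, be, k, tau.
  destruct Paa as [a1 a2]. destruct Pbb as [b1 b2]. destruct P as [p1 p2]. destruct Q as [q1 q2].
  unfold Im, Re. simpl fst; simpl snd.
  split; unfold Cconj, Cmult, Cplus, Copp, Cminus, RtoC; simpl; apply injective_projections; simpl; field; repeat split; intro; nra.
Qed.

Lemma arith2 (x y : R) (Paa Pbb P Q N1 N2 S ps : C) : 0 < y ->
  N1 = (Cconj ((0%R, (- / (2 * y))%R) * (x, y)) * (((0%R, (- / (2 * y))%R) * (x, y)) * Paa + (- (0%R, (- / (2 * y))%R)) * P) +
        Cconj (- (0%R, (- / (2 * y))%R)) * (((0%R, (- / (2 * y))%R) * (x, y)) * Q + (- (0%R, (- / (2 * y))%R)) * Pbb))%C ->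
  N2 = (Cconj ((0%R, (- / (2 * y))%R) * (x, y)) * (((0%R, (- / (2 * y))%R) * (x, y)) * Paa + (- (0%R, (- / (2 * y))%R)) * Q) +
        Cconj (- (0%R, (- / (2 * y))%R)) * (((0%R, (- / (2 * y))%R) * (x, y)) * P + (- (0%R, (- / (2 * y))%R)) * Pbb))%C ->
  S = ((/ (2 * PI))%R * ((sqrt_det_g (x, y) * ginv (x, y) false false)%R * (Paa + Paa) +
     ((sqrt_det_g (x, y) * ginv (x, y) false true)%R * (P + Q) +
     ((sqrt_det_g (x, y) * ginv (x, y) true false)%R * (Q + P) +
     ((sqrt_det_g (x, y) * ginv (x, y) true true)%R * (Pbb + Pbb) + 0)))))%C ->
  ps = (- / ((2 * PI)%R * Ci) * (1 * P + (-1) * Q))%C ->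
  (N1 + N2 = RtoC (PI / (2 * y)) * S)%C /\ (N1 - N2 = RtoC (PI / y) * ps)%C.
Proof.
  intros Hy E1 E2 E3 E4. subst. apply (arith x y Paa Pbb P Q Hy).
Qed.

Lemma final_real (S ps N1 N2 : C) (y : R) : 0 < y ->
  (N1 + N2 = RtoC (PI / (2 * y)) * S)%C -> (N1 - N2 = RtoC (PI / y) * ps)%C ->
  Im N1 = 0 -> 0 <= Re N1 -> Im N2 = 0 -> 0 <= Re N2 ->
  (Im S = 0 /\ Re S >= 2 * Cmod ps) /\
  ((N1 = RtoC 0 \/ N2 = RtoC 0) -> S = RtoC (2 * Cmod ps)).
Proof.
  intros Hy A1 A2 I1 R1 I2 R2.
  pose proof PI_RGT_0 as HPI.
  set (c := PI / (2 * y)) in *.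
  assert (Hc : 0 < c) by (unfold c; apply Rdiv_lt_0_compat; lra).
  assert (Hc2 : PI / y = 2 * c) by (unfold c; field; lra).
  rewrite Hc2 in A2.
  assert (ReA1 : Re N1 + Re N2 = c * Re S) by (rewrite <- Re_RtoC_mult, <- A1; reflexivity).
  assert (ImA1 : Im N1 + Im N2 = c * Im S) by (rewrite <- Im_RtoC_mult, <- A1; reflexivity).
  assert (ReA2 : Re N1 - Re N2 = 2 * c * Re ps) by (rewrite <- Re_RtoC_mult, <- A2; unfold Re; simpl; ring).
  assert (ImA2 : Im N1 - Im N2 = 2 * c * Im ps) by (rewrite <- Im_RtoC_mult, <- A2; unfold Im; simpl; ring).
  assert (IS : Im S = 0).
  { rewrite I1, I2 in ImA1. apply (Rmult_eq_reg_l c). lra. lra. }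
  assert (Ips : Im ps = 0).
  { rewrite I1, I2 in ImA2. apply (Rmult_eq_reg_l (2 * c)). lra. lra. }
  assert (Cps : Cmod ps = Rabs (Re ps)).
  { replace ps with (RtoC (Re ps)). apply Cmod_R. destruct ps; unfold Re, Im in *; simpl in *.
    rewrite Ips; reflexivity. }
  assert (ES : S = RtoC (Re S)).
  { destruct S; unfold Re, Im in *; simpl in *. rewrite IS; reflexivity. }
  rewrite Cps. split; [split|].
  - auto.
  - apply Rle_ge. apply (Rmult_le_reg_l c); auto.
    destruct (Rabs_pos (Re ps)). 
    unfold Rabs in *; destruct (Rcase_abs (Re ps)); nra.
    unfold Rabs in *; destruct (Rcase_abs (Re ps)); nra.
  - intros [H | H]; rewrite ES; f_equal; rewrite H in *; simpl in *.
    + apply (Rmult_eq_reg_l c); [|lra]. unfold Rabs; destruct (Rcase_abs (Re ps)); nra.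
    + apply (Rmult_eq_reg_l c); [|lra]. unfold Rabs; destruct (Rcase_abs (Re ps)); nra.
Qed.

Theorem mainTheorem1 (theta : R) (tau : C) (p : coefs) :
  0 < Im tau ->
  is_projection theta p ->
  (Im (S_tau theta tau p) = 0 /\ Re (S_tau theta tau p) >= 2 * Cmod (psi theta p)) /\
  ((nct_mul theta (delbar_tau tau p) p = zero_coefs \/
    nct_mul theta p (del_tau tau p) = zero_coefs \/
    nct_mul theta (del_tau tau p) p = zero_coefs \/
    nct_mul theta p (delbar_tau tau p) = zero_coefs) ->
   S_tau theta tau p = RtoC (2 * Cmod (psi theta p))).
Proof.
  intros Hy [Hs [Hpp Hps]].
  pose proof (schwartz_rapid p Hs) as Hp.
  assert (Ra : Rapid (d1 p)) by auto with rapid.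
  assert (Rb : Rapid (d2 p)) by auto with rapid.
  assert (Sa : nct_star theta (d1 p) = d1 p) by (apply star_d1; auto).
  assert (Sb : nct_star theta (d2 p) = d2 p) by (apply star_d2; auto).
  assert (La : d1 p = lin2 1 (nct_mul theta (d1 p) p) 1 (nct_mul theta p (d1 p))).
  { rewrite <- (leibniz1 theta p p Hp Hp). rewrite <- Hpp. reflexivity. }
  assert (Lb : d2 p = lin2 1 (nct_mul theta (d2 p) p) 1 (nct_mul theta p (d2 p))).
  { rewrite <- (leibniz2 theta p p Hp Hp). rewrite <- Hpp. reflexivity. }
  set (k := (/ (tau - Cconj tau))%C).
  assert (Hk : k = (0%R, (- / (2 * Im tau))%R)) by (apply inv_tau; auto).
  set (al := (k * tau)%C). set (be := (- k)%C).
  assert (EV : delbar_tau tau p = lin2 al (d1 p) be (d2 p)).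
  { apply functional_extensionality; intro m; apply functional_extensionality; intro n.
    unfold delbar_tau, nct_scal, nct_sub, lin2, al, be, k. ring. }
  assert (ED : del_tau tau p = lin2 (k * - Cconj tau)%C (d1 p) k (d2 p)).
  { apply functional_extensionality; intro m; apply functional_extensionality; intro n.
    unfold del_tau, nct_scal, nct_add, lin2, k. ring. }
  assert (RV : Rapid (delbar_tau tau p)) by (rewrite EV; auto with rapid).
  assert (RD : Rapid (del_tau tau p)) by (rewrite ED; auto with rapid).
  assert (SD : nct_star theta (del_tau tau p) = delbar_tau tau p).
  { rewrite ED, star_lin, Sa, Sb, EV. f_equal.
    - unfold al. rewrite Hk. destruct tau as [x y]. unfold Cconj, Cmult, Copp; simpl.
      apply injective_projections; simpl; ring.
    - unfold be. rewrite Hk. unfold Cconj, Copp; simpl. apply injective_projections; simpl; ring. }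
  set (V := delbar_tau tau p) in *.
  set (X1 := nct_mul theta V p). set (X2 := nct_mul theta p V).
  assert (RX1 : Rapid X1) by (unfold X1; auto with rapid).
  assert (RX2 : Rapid X2) by (unfold X2; auto with rapid).
  set (N1 := nct_int (nct_mul theta (nct_star theta X1) X1)).
  set (N2 := nct_int (nct_mul theta (nct_star theta X2) X2)).
  set (Paa := nct_int (nct_mul theta p (nct_mul theta (d1 p) (d1 p)))).
  set (Pbb := nct_int (nct_mul theta p (nct_mul theta (d2 p) (d2 p)))).
  set (P := nct_int (nct_mul theta p (nct_mul theta (d1 p) (d2 p)))).
  set (Q := nct_int (nct_mul theta p (nct_mul theta (d2 p) (d1 p)))).
  assert (EN1 : N1 = (Cconj al * (al * Paa + be * P) + Cconj be * (al * Q + be * Pbb))%C).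
  { unfold N1. unfold X1. rewrite EV. rewrite mul_lin_l by auto. rewrite star_lin.
    rewrite mul_lin_l by auto with rapid. rewrite !mul_lin_r by auto with rapid. rewrite !int_lin.
    rewrite (K2 theta p Hp Hpp Hps (d1 p) (d1 p)) by auto.
    rewrite (K2 theta p Hp Hpp Hps (d1 p) (d2 p)) by auto.
    rewrite (K2 theta p Hp Hpp Hps (d2 p) (d1 p)) by auto.
    rewrite (K2 theta p Hp Hpp Hps (d2 p) (d2 p)) by auto.
    reflexivity. }
  assert (EN2 : N2 = (Cconj al * (al * Paa + be * Q) + Cconj be * (al * P + be * Pbb))%C).
  { unfold N2. unfold X2. rewrite EV. rewrite mul_lin_r by auto. rewrite star_lin.
    rewrite mul_lin_l by auto with rapid. rewrite !mul_lin_r by auto with rapid. rewrite !int_lin.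
    rewrite (K3 theta p Hp Hpp Hps (d1 p) (d1 p)) by auto.
    rewrite (K3 theta p Hp Hpp Hps (d1 p) (d2 p)) by auto.
    rewrite (K3 theta p Hp Hpp Hps (d2 p) (d1 p)) by auto.
    rewrite (K3 theta p Hp Hpp Hps (d2 p) (d2 p)) by auto.
    reflexivity. }
  assert (Eaa : nct_int (nct_mul theta (d1 p) (d1 p)) = (Paa + Paa)%C) by (apply (K1 theta p Hp Hpp Hps); auto).
  assert (Ebb : nct_int (nct_mul theta (d2 p) (d2 p)) = (Pbb + Pbb)%C) by (apply (K1 theta p Hp Hpp Hps); auto).
  assert (Eab : nct_int (nct_mul theta (d1 p) (d2 p)) = (P + Q)%C) by (apply (K1 theta p Hp Hpp Hps); auto).
  assert (Eba : nct_int (nct_mul theta (d2 p) (d1 p)) = (Q + P)%C) by (apply (K1 theta p Hp Hpp Hps); auto).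
  assert (ES : S_tau theta tau p = ((/ (2 * PI))%R * ((sqrt_det_g tau * ginv tau false false)%R * (Paa + Paa) +
     ((sqrt_det_g tau * ginv tau false true)%R * (P + Q) +
     ((sqrt_det_g tau * ginv tau true false)%R * (Q + P) +
     ((sqrt_det_g tau * ginv tau true true)%R * (Pbb + Pbb) + 0)))))%C).
  { unfold S_tau. cbn [map fold_right fst snd dmu]. rewrite Eaa, Ebb, Eab, Eba. reflexivity. }
  assert (Epsi : psi theta p = (- / ((2 * PI)%R * Ci) * (1 * P + (-1) * Q))%C).
  { unfold psi.
    replace (nct_sub (nct_mul theta (d1 p) (d2 p)) (nct_mul theta (d2 p) (d1 p))) with
      (lin2 1 (nct_mul theta (d1 p) (d2 p)) (-1) (nct_mul theta (d2 p) (d1 p))).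
    2: { apply functional_extensionality; intro m; apply functional_extensionality; intro n.
         unfold lin2, nct_sub. ring. }
    rewrite mul_lin_r by auto with rapid. rewrite int_lin. reflexivity. }
  destruct (positivity theta X1 RX1) as [I1 R1].
  destruct (positivity theta X2 RX2) as [I2 R2].
  fold N1 in I1, R1. fold N2 in I2, R2.
  destruct tau as [x y]. unfold Im in Hy; simpl in Hy.
  assert (Hk' : k = (0%R, (- / (2 * y))%R)) by (rewrite Hk; reflexivity).
  destruct (arith2 x y Paa Pbb P Q N1 N2 (S_tau theta (x, y) p) (psi theta p) Hy) as [A1 A2].
  { rewrite EN1. unfold al, be. rewrite Hk'. reflexivity. }
  { rewrite EN2. unfold al, be. rewrite Hk'. reflexivity. }
  { exact ES. }
  { exact Epsi. }
  destruct (final_real _ _ _ _ y Hy A1 A2 I1 R1 I2 R2) as [F1 F2].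
  split; auto.
  intros Heq. apply F2.
  assert (Z1 : X1 = zero_coefs -> N1 = RtoC 0).
  { intros HZ. unfold N1. rewrite HZ, mul_zero_r. reflexivity. }
  assert (Z2 : X2 = zero_coefs -> N2 = RtoC 0).
  { intros HZ. unfold N2. rewrite HZ, mul_zero_r. reflexivity. }
  destruct Heq as [H | [H | [H | H]]].
  - left. apply Z1. exact H.
  - left. apply Z1.
    assert (E : X1 = nct_star theta (nct_mul theta p (del_tau (x, y) p))).
    { rewrite star_mul by auto. rewrite SD, <- Hps. reflexivity. }
    rewrite E, H. apply star_zero.
  - right. apply Z2.
    assert (E : X2 = nct_star theta (nct_mul theta (del_tau (x, y) p) p)).
    { rewrite star_mul by auto. rewrite SD, <- Hps. reflexivity. }
    rewrite E, H. apply star_zero.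
  - right. apply Z2. exact H.
Qed.
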